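(* Let $(\mathcal A,\tau)$ be a $W^*$-probability space, $I$ a set, and $\mathbf A=(A_i)_{i\in I}$, $\mathbf B=(B_i)_{i\in I}\in\mathcal A^I$ with $\tau(A_i)\ne0$ and $\tau(B_i)\ne0$ for all $i\in I$. Then the operators $\operatorname{D}_{\tau(\mathbf A)}$, $\operatorname{D}_{\tau(\mathbf B)}$ and $\operatorname{D}_{\mathbf A/\tau(\mathbf A)}$ on $\mathbb{C}\{X_i:i\in I\}$ pairwise commute, $\operatorname{D}_{\mathbf A}=\operatorname{D}_{\tau(\mathbf A)}+\operatorname{D}_{\mathbf A/\tau(\mathbf A)}$, and $e^{\operatorname{D}_{\mathbf A}}=e^{\operatorname{D}_{\mathbf A/\tau(\mathbf A)}}e^{\operatorname{D}_{\tau(\mathbf A)}}$.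
   Context: $(\mathcal A,\tau)$: von Neumann algebra with faithful normal tracial state. $\tau(\mathbf A)$ denotes the family $(\tau(A_i)1_{\mathcal A})_{i\in I}$ and $\mathbf A/\tau(\mathbf A)$ the family $(A_i/\tau(A_i))_{i\in I}$. $\mathbb{C}\{X_i:i\in I\}$: the complex vector space with basis the formal symbols $M_0\operatorname{tr}(M_1)\cdots\operatorname{tr}(M_n)$, $n\ge0$, $M_0$ a (possibly empty) monomial in non-commuting indeterminates $(X_i)_{i\in I}$, $\{M_1,\dots,M_n\}$ an unordered multiset of non-empty monomials; product by concatenating $M_0N_0$ and merging the trace factors; $\operatorname{tr}(M_0\operatorname{tr}(M_1)\cdots\operatorname{tr}(M_n))=\operatorname{tr}(M_0)\cdots\operatorname{tr}(M_n)$, $\operatorname{tr}(1)=1$. Degree = sum of degrees of $M_0,\dots,M_n$; each $\mathbb{C}_d\{X_i:i\in J\}$ ($J$ finite, degree $\le d$) is finite-dimensional. Free cumulants $\kappa$: determined by $\tau(A_1\cdots A_n)=\sum_{\pi\in NC(n)}\prod_{V\in\pi}\kappa(A_V)$. Kreweras complement $K_\pi(\sigma)$ for $\sigma\preceq\pi$ in $NC(n)$: the largest $\rho\in NC(n)$ such that $\sigma$ on $\{1,\dots,n\}$ and $\rho$ on $\{1',\dots,n'\}$ (cyclic order $1,1',\dots,n,n'$) form a non-crossing partition finer than the partition with blocks $V\cup V'$, $V\in\pi$. Free log-cumulants: for $n\ge2$ and $\tau(A_j)=1$, $L\kappa(A_1,\dots,A_n)=\sum\frac{(-1)^{1+l}}{l}\prod_{i=1}^l\prod_{V\in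 K_{\pi_i}(\pi_{i-1})}\kappa(A_V)$ over strict chains $0_n=\pi_0\prec\pi_1\prec\dots\prec\pi_l=1_n$ in $NC(n)$; for non-zero traces $L\kappa(A_1,\dots,A_n)=L\kappa(A_1/\tau(A_1),\dots,A_n/\tau(A_n))$; $L\kappa(A)=\operatorname{Log}\tau(A)$ (principal branch) for $n=1$. $\operatorname{D}_{\mathbf C}$ for a family $\mathbf C=(C_i)$ with non-zero traces: on monomials, $\operatorname{D}_{\mathbf C}(X_{i(1)}\cdots X_{i(n)})=\sum_{m=1}^n\sum_{1\le k_1<\dots<k_m\le n}L\kappa(C_{i(k_1)},\dots,C_{i(k_m)})\,X_{i(1)}\cdots X_{i(k_1-1)}\operatorname{tr}(X_{i(k_1)}\cdots X_{i(k_2-1)})\cdots\operatorname{tr}(X_{i(k_{m-1})}\cdots X_{i(k_m-1)})\,X_{i(k_m)}\cdots X_{i(n)}$, extended linearly by $\operatorname{D}(M_0\operatorname{tr}(M_1)\cdots\operatorname{tr}(M_n))=\operatorname{D}(M_0)\operatorname{tr}(M_1)\cdots\operatorname{tr}(M_n)+\sum_jM_0\cdots\operatorname{tr}(\operatorname{D}M_j)\cdots\operatorname{tr}(M_n)$. It preserves each $\mathbb{C}_d\{X_i:i\in J\}$, and $e^{\operatorname{D}_{\mathbf C}}$ is the exponential series on each of these finite-dimensional spaces. *)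

(* Defs.v *)
From Stdlib Require Import Reals List Permutation Classical ClassicalEpsilon Arith.
Import ListNotations.
Set Implicit Arguments.

Definition C : Type := (R * R)%type.
Definition RtoC (x : R) : C := (x, 0%R).
Definition C0 : C := (0%R, 0%R).
Definition C1 : C := (1%R, 0%R).
Definition Cadd (z w : C) : C := (fst z + fst w, snd z + snd w)%R.
Definition Cmul (z w : C) : C :=
  (fst z * fst w - snd z * snd w, fst z * snd w + snd z * fst w)%R.
Definition Copp (z : C) : C := (- fst z, - snd z)%R.
Definition Cconj (z : C) : C := (fst z, - snd z)%R.
Definition Cinv (z : C) : C :=
  let d := (fst z * fst z + snd z * snd z)%R in (fst z / d, - snd z / d)%R.
Definition Cmod (z : C) : R := sqrt (fst z * fst z + snd z * snd z)%R.
(* principal argument, in (-PI, PI] *)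
Definition Carg (z : C) : R :=
  let x := fst z in let y := snd z in
  match Rlt_dec 0 x with
  | left _ => atan (y / x)
  | right _ =>
    match Rlt_dec x 0 with
    | left _ => match Rle_dec 0 y with
                | left _ => (atan (y / x) + PI)%R
                | right _ => (atan (y / x) - PI)%R end
    | right _ => match Rlt_dec 0 y with
                 | left _ => (PI / 2)%R
                 | right _ => match Rlt_dec y 0 with
                              | left _ => (- (PI / 2))%R
                              | right _ => 0%R end end
    end
  end.
Definition CLog (z : C) : C := (ln (Cmod z), Carg z).
Definition Csum (l : list C) : C := fold_right Cadd C0 l.
Definition Cprod (l : list C) : C := fold_right Cmul C1 l.
Definition Ccv (u : nat -> C) (z : C) : Prop :=
  Un_cv (fun N => fst (u N)) (fst z) /\ Un_cv (fun N => snd (u N)) (snd z).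

(* Tracial *-probability space (algebraic surrogate of a W*-probability *)
Record StarProbSpace := {
  alg :> Type;
  a_add : alg -> alg -> alg;
  a_mul : alg -> alg -> alg;
  a_zero : alg;
  a_one : alg;
  a_opp : alg -> alg;
  a_scal : C -> alg -> alg;
  a_star : alg -> alg;
  tau : alg -> C;
  ax_add_assoc : forall a b c, a_add a (a_add b c) = a_add (a_add a b) c;
  ax_add_comm : forall a b, a_add a b = a_add b a;
  ax_add_0 : forall a, a_add a_zero a = a;
  ax_add_opp : forall a, a_add a (a_opp a) = a_zero;
  ax_mul_assoc : forall a b c, a_mul a (a_mul b c) = a_mul (a_mul a b) c;
  ax_mul_1l : forall a, a_mul a_one a = a;
  ax_mul_1r : forall a, a_mul a a_one = a;
  ax_mul_addl : forall a b c, a_mul (a_add a b) c = a_add (a_mul a c) (a_mul b c);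
  ax_mul_addr : forall a b c, a_mul a (a_add b c) = a_add (a_mul a b) (a_mul a c);
  ax_scal_1 : forall a, a_scal C1 a = a;
  ax_scal_mul : forall c d a, a_scal (Cmul c d) a = a_scal c (a_scal d a);
  ax_scal_addC : forall c d a, a_scal (Cadd c d) a = a_add (a_scal c a) (a_scal d a);
  ax_scal_addA : forall c a b, a_scal c (a_add a b) = a_add (a_scal c a) (a_scal c b);
  ax_scal_mull : forall c a b, a_mul (a_scal c a) b = a_scal c (a_mul a b);
  ax_scal_mulr : forall c a b, a_mul a (a_scal c b) = a_scal c (a_mul a b);
  ax_star_invol : forall a, a_star (a_star a) = a;
  ax_star_add : forall a b, a_star (a_add a b) = a_add (a_star a) (a_star b);
  ax_star_mul : forall a b, a_star (a_mul a b) = a_mul (a_star b) (a_star a);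
  ax_star_scal : forall c a, a_star (a_scal c a) = a_scal (Cconj c) (a_star a);
  ax_tau_add : forall a b, tau (a_add a b) = Cadd (tau a) (tau b);
  ax_tau_scal : forall c a, tau (a_scal c a) = Cmul c (tau a);
  ax_tau_one : tau a_one = C1;
  ax_tau_trace : forall a b, tau (a_mul a b) = tau (a_mul b a);
  ax_tau_pos : forall a, snd (tau (a_mul (a_star a) a)) = 0%R
                         /\ (0 <= fst (tau (a_mul (a_star a) a)))%R;
  ax_tau_faithful : forall a, tau (a_mul (a_star a) a) = C0 -> a = a_zero
}.

Definition aprod (Sp : StarProbSpace) (l : list Sp) : Sp :=
  fold_right (@a_mul Sp) (@a_one Sp) l.

(* A partition is a list of blocks; blocks are increasing lists.       *)
Definition partition := list (list nat).

Fixpoint add_to_block (j x : nat) (p : partition) : partition :=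
  match p, j with
  | [], _ => []
  | b :: p', 0 => (b ++ [x]) :: p'
  | b :: p', S j' => b :: add_to_block j' x p'
  end.

(* all set partitions of {0,...,n-1}, each exactly once *)
Fixpoint set_partitions (n : nat) : list partition :=
  match n with
  | 0 => [ [] ]
  | S m => flat_map (fun p => (p ++ [[m]]) ::
                      map (fun j => add_to_block j m p) (seq 0 (length p)))
                    (set_partitions m)
  end.

Definition crossing_pair (b c : list nat) : bool :=
  existsb (fun a => existsb (fun x => existsb (fun d => existsb (fun y =>
     (Nat.ltb a x && Nat.ltb x d && Nat.ltb d y)%bool) c) b) c) b.

Definition noncrossing (p : partition) : bool :=
  forallb (fun i => forallb (fun j =>
      (Nat.eqb i j || negb (crossing_pair (nth i p []) (nth j p [])))%bool)
    (seq 0 (length p))) (seq 0 (length p)).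

Definition NC (n : nat) : list partition := filter noncrossing (set_partitions n).

Definition incl_b (b c : list nat) : bool :=
  forallb (fun x => existsb (Nat.eqb x) c) b.
Definition finer (p q : partition) : bool :=
  forallb (fun b => existsb (fun c => incl_b b c) q) p.
Definition strictly_finer (p q : partition) : bool :=
  (finer p q && negb (finer q p))%bool.

Definition one_n (n : nat) : partition := [seq 0 n].
Definition zero_n (n : nat) : partition := map (fun i => [i]) (seq 0 n).

(* strict chains p = π_0 ≺ π_1 ≺ ... ≺ π_l = 1_n in NC(n), l >= 1,
   returned as the lists [π_1; ...; π_l]; a strict chain in NC(n) has
   length at most n-1, so fuel n suffices. *)
Fixpoint chains_from (n fuel : nat) (p : partition) : list (list partition) :=
  match fuel with
  | 0 => []
  | S f => flat_map (fun q =>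
             if strictly_finer p q then
               (if finer (one_n n) q then [[q]]
                else map (cons q) (chains_from n f q))
             else []) (NC n)
  end.

Definition strict_chains (n : nat) : list (list partition) :=
  chains_from n n (zero_n n).

(* Kreweras complement K_pi(sigma): the largest rho in NC(n) such that
   sigma (on points 2i) and rho (on points 2i+1) together form a
   non-crossing partition finer than {V ∪ V' : V ∈ pi}. *)
Definition interleave (s r : partition) : partition :=
  map (map (fun i => 2 * i)) s ++ map (map (fun i => 2 * i + 1)) r.
Definition krew_ok (pi sigma rho : partition) : bool :=
  (finer sigma pi && finer rho pi && noncrossing (interleave sigma rho))%bool.
Definition kreweras (n : nat) (pi sigma : partition) : partition :=
  match find (fun rho => (krew_ok pi sigma rho &&
                forallb (fun rho' => negb (krew_ok pi sigma rho') || finer rho' rho)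
                        (NC n))%bool) (NC n) with
  | Some r => r
  | None => []
  end.

Definition sub (Sp : StarProbSpace) (l : list Sp) (V : list nat) : list Sp :=
  map (fun i => nth i l (@a_one Sp)) V.

Fixpoint kappa_f (Sp : StarProbSpace) (fuel : nat) (l : list Sp) : C :=
  match fuel with
  | 0 => C0
  | S f =>
    Cadd (@tau Sp (@aprod Sp l))
      (Copp (Csum (map (fun p => Cprod (map (fun V => @kappa_f Sp f (@sub Sp l V)) p))
                 (filter (fun p => negb (finer (one_n (length l)) p))
                         (NC (length l))))))
  end.
Definition kappa (Sp : StarProbSpace) (l : list Sp) : C := @kappa_f Sp (length l) l.

(* chain formula, for n >= 2 and unit traces *)
Definition Lkappa_unit (Sp : StarProbSpace) (l : list Sp) : C :=
  let n := length l in
  Csum (map (fun ch =>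
      let lc := length ch in
      Cmul (RtoC (pow (-1) (S lc) / INR lc)%R)
        (Cprod (map (fun pc => Cprod (map (fun V => @kappa Sp (@sub Sp l V))
                                         (kreweras n (snd pc) (fst pc))))
                    (combine (zero_n n :: ch) ch))))
    (strict_chains n)).

Definition Lkappa (Sp : StarProbSpace) (l : list Sp) : C :=
  match l with
  | [] => C0
  | [a] => CLog (@tau Sp a)
  | _ => @Lkappa_unit Sp (map (fun a => @a_scal Sp (Cinv (@tau Sp a)) a) l)
  end.

Definition tau_fam (Sp : StarProbSpace) (I : Type) (A : I -> Sp) : I -> Sp :=
  fun i => @a_scal Sp (@tau Sp (A i)) (@a_one Sp).
Definition norm_fam (Sp : StarProbSpace) (I : Type) (A : I -> Sp) : I -> Sp :=
  fun i => @a_scal Sp (Cinv (@tau Sp (A i))) (A i).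

(* A basis element M_0 tr(M_1)...tr(M_n) is a key (M_0, [M_1;...;M_n]); *)
(* keys are identified up to permutation of the trace factors.         *)
(* A trace polynomial is a finite formal linear combination of keys.   *)
Definition key (I : Type) : Type := (list I * list (list I))%type.
Definition tpoly (I : Type) : Type := list (C * key I).

Fixpoint sublists (T : Type) (l : list T) : list (list T) :=
  match l with
  | [] => [[]]
  | x :: t => map (cons x) (sublists t) ++ sublists t
  end.

Section DOp.
Variables (Sp : StarProbSpace) (I : Type) (Cf : I -> Sp).

(* D_C on a monomial X_{i(1)}...X_{i(n)} (0-based indices k_1<...<k_m) *)
Definition D_mono (w : list I) : tpoly I :=
  flat_map (fun ks => match ks with
    | [] => []
    | k1 :: _ =>
      [(@Lkappa Sp (map (fun k => nth k (map Cf w) (@a_one Sp)) ks),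
        (firstn k1 w ++ skipn (last ks 0) w,
         map (fun ab => firstn (snd ab - fst ab) (skipn (fst ab) w))
             (combine ks (tl ks))))]
    end) (sublists (seq 0 (length w))).

(* tr(N_0 tr(N_1)...tr(N_k)) = tr(N_0)...tr(N_k), with tr(1) = 1 *)
Definition tr_tpoly (v : tpoly I) : tpoly I :=
  map (fun ck => (fst ck, ([] : list I,
        match fst (snd ck) with [] => snd (snd ck) | Mh :: Mt => (Mh :: Mt) :: snd (snd ck) end)))
      v.

Definition D_key (k : key I) : tpoly I :=
  let M0 := fst k in let Ts := snd k in
  map (fun ck => (fst ck, (fst (snd ck), snd (snd ck) ++ Ts))) (D_mono M0)
  ++ flat_map (fun j =>
       map (fun ck => (fst ck, (M0 ++ fst (snd ck),
                                (firstn j Ts ++ skipn (S j) Ts) ++ snd (snd ck))))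
           (tr_tpoly (D_mono (nth j Ts []))))
     (seq 0 (length Ts)).

Definition Dop (v : tpoly I) : tpoly I :=
  flat_map (fun ck => map (fun dk => (Cmul (fst ck) (fst dk), snd dk)) (D_key (snd ck))) v.
End DOp.

Section TPoly.
Variable I : Type.

Definition key_equiv (k k' : key I) : Prop :=
  fst k = fst k' /\ Permutation (snd k) (snd k').

Definition coeff (v : tpoly I) (k : key I) : C :=
  Csum (map (fun ck => if excluded_middle_informative (key_equiv k (snd ck))
                       then fst ck else C0) v).

Definition tp_eq (v w : tpoly I) : Prop := forall k, coeff v k = coeff w k.

(* genuine elements: trace factors are non-empty monomials *)
Definition tp_valid (v : tpoly I) : Prop :=
  forall ck, In ck v -> forall M, In M (snd (snd ck)) -> M <> [].

Definition commutes (D1 D2 : tpoly I -> tpoly I) : Prop :=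
  forall v, tp_valid v -> tp_eq (D1 (D2 v)) (D2 (D1 v)).

(* exp_series D v w : the exponential series sum_j D^j v / j! converges
   (coefficientwise, i.e. in the finite-dimensional space
   C_d{X_i : i in J} containing v) to w;  i.e. w = e^D v. *)
Definition exp_partial (D : tpoly I -> tpoly I) (v : tpoly I) (k : key I) (N : nat) : C :=
  Csum (map (fun j => Cmul (RtoC (/ INR (fact j))%R) (coeff (Nat.iter j D v) k))
            (seq 0 (S N))).
Definition exp_series (D : tpoly I -> tpoly I) (v w : tpoly I) : Prop :=
  forall k, Ccv (exp_partial D v k) (coeff w k).
End TPoly.

(* Main.v *)
Require Import Defs.
From Stdlib Require Import Reals List Permutation Classical ClassicalEpsilon Arith.
Import ListNotations.
From Stdlib Require Import Lia Lra Ring Bool.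
Require Import Defs.
Import ListNotations.
Set Implicit Arguments.

Notation CC := C.

Lemma Ceq (a b : CC) : fst a = fst b -> snd a = snd b -> a = b.
Proof. destruct a, b; simpl; intros; subst; reflexivity. Qed.

Definition Csub (x y : CC) := Cadd x (Copp y).

Lemma Cring_th : ring_theory C0 C1 Cadd Cmul Csub Copp (@eq CC).
Proof.
  constructor; intros; apply Ceq; destruct x; try destruct y; try destruct z;
    unfold Csub, Cadd, Cmul, Copp, C0, C1; simpl; ring.
Qed.
Add Ring Cring : Cring_th.

Lemma Csum_app l1 l2 : Csum (l1 ++ l2) = Cadd (Csum l1) (Csum l2).
Proof. induction l1; simpl. ring. rewrite IHl1. ring. Qed.

Lemma Csum_map_add {T} (f g : T -> CC) l :
  Csum (map (fun x => Cadd (f x) (g x)) l) = Cadd (Csum (map f l)) (Csum (map g l)).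
Proof. induction l; simpl. ring. rewrite IHl; ring. Qed.

Lemma Csum_map_mul {T} c (f : T -> CC) l :
  Csum (map (fun x => Cmul c (f x)) l) = Cmul c (Csum (map f l)).
Proof. induction l; simpl. ring. rewrite IHl; ring. Qed.

Lemma Csum_map_ext {T} (f g : T -> CC) l :
  (forall x, In x l -> f x = g x) -> Csum (map f l) = Csum (map g l).
Proof. intro H; induction l; simpl; auto. rewrite H, IHl; auto. intros; apply H; simpl; auto. left; auto. Qed.

Lemma Csum_map_zero {T} (f : T -> CC) l :
  (forall x, In x l -> f x = C0) -> Csum (map f l) = C0.
Proof. intro H; induction l; simpl; auto. rewrite H, IHl; [ring| |]; auto. intros; apply H; simpl; auto. left; auto. Qed.

Lemma Csum_flat_map {T U} (h : T -> list U) (f : U -> CC) l :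
  Csum (map f (flat_map h l)) = Csum (map (fun x => Csum (map f (h x))) l).
Proof. induction l; simpl; auto. rewrite map_app, Csum_app, IHl; auto. Qed.

Lemma Csum_perm (l l' : list CC) : Permutation l l' -> Csum l = Csum l'.
Proof. induction 1; simpl; try ring; congruence. Qed.

Lemma incl_b_spec b c : incl_b b c = true <-> (forall x, In x b -> In x c).
Proof.
  unfold incl_b; rewrite forallb_forall; split; intros H x Hx.
  - specialize (H x Hx). apply existsb_exists in H. destruct H as [y [Hy E]].
    apply Nat.eqb_eq in E; subst; auto.
  - apply existsb_exists. exists x; split; auto. apply Nat.eqb_refl.
Qed.

Lemma finer_spec p q : finer p q = true <-> (forall b, In b p -> exists c, In c q /\ incl_b b c = true).
Proof.
  unfold finer; rewrite forallb_forall; split; intros H b Hb; specialize (H b Hb);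
  apply existsb_exists in H || apply existsb_exists; auto.
Qed.

Lemma crossing_spec b c : crossing_pair b c = true <->
  exists a x d y, In a b /\ In x c /\ In d b /\ In y c /\ a < x /\ x < d /\ d < y.
Proof.
  unfold crossing_pair; split.
  - intro H. apply existsb_exists in H as [a [Ha H]].
    apply existsb_exists in H as [x [Hx H]].
    apply existsb_exists in H as [d [Hd H]].
    apply existsb_exists in H as [y [Hy H]].
    apply andb_prop in H as [H H3]. apply andb_prop in H as [H1 H2].
    apply Nat.ltb_lt in H1, H2, H3. exists a, x, d, y; tauto.
  - intros [a [x [d [y [Ha [Hx [Hd [Hy [H1 [H2 H3]]]]]]]]]].
    apply existsb_exists; exists a; split; auto.
    apply existsb_exists; exists x; split; auto.
    apply existsb_exists; exists d; split; auto.
    apply existsb_exists; exists y; split; auto.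
    apply Nat.ltb_lt in H1, H2, H3. rewrite H1, H2, H3; reflexivity.
Qed.

Lemma noncrossing_spec p : noncrossing p = true <->
  (forall i j, i < length p -> j < length p -> i <> j ->
     crossing_pair (nth i p []) (nth j p []) = false).
Proof.
  unfold noncrossing; rewrite forallb_forall; split.
  - intros H i j Hi Hj Hij.
    assert (H1 := H i (proj2 (in_seq _ _ _) (conj (Nat.le_0_l _) Hi))).
    rewrite forallb_forall in H1.
    specialize (H1 j (proj2 (in_seq _ _ _) (conj (Nat.le_0_l _) Hj))).
    apply orb_prop in H1 as [H1|H1]. apply Nat.eqb_eq in H1; lia.
    apply negb_true_iff in H1; auto.
  - intros H i Hi. apply forallb_forall. intros j Hj.
    apply in_seq in Hi, Hj. destruct (Nat.eq_dec i j). subst; rewrite Nat.eqb_refl; auto.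
    rewrite H by lia. apply orb_true_r.
Qed.

Definition pinv (n : nat) (p : partition) : Prop :=
  (forall b, In b p -> b <> []) /\ (forall b x, In b p -> In x b -> x < n) /\ NoDup (concat p).

Lemma add_to_block_in j x p b : In b (add_to_block j x p) -> In b p \/ exists b0, In b0 p /\ b = b0 ++ [x].
Proof.
  revert j; induction p as [|b1 p IH]; intros j H; simpl in *. destruct j; simpl in H; tauto.
  destruct j; simpl in H. destruct H as [H|H]. right; exists b1; split; auto. tauto.
  destruct H as [H|H]; auto. destruct (IH _ H) as [H1|[b0 [H1 H2]]]; eauto.
Qed.

Lemma add_to_block_concat j x p : j < length p -> Permutation (concat (add_to_block j x p)) (x :: concat p).
Proof.
  revert j; induction p as [|b1 p IH]; intros j H; simpl in *. lia.
  destruct j; simpl. rewrite <- app_assoc. simpl. apply Permutation_sym, Permutation_middle.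
  change (x :: b1 ++ concat p) with ((x :: b1) ++ concat p).
  eapply perm_trans. apply Permutation_app_head, IH; lia.
  apply Permutation_sym, Permutation_middle.
Qed.

Lemma sp_inv n p : In p (set_partitions n) -> pinv n p.
Proof.
  revert p; induction n as [|m IH]; intros p H; simpl in H.
  - destruct H as [H|[]]; subst. split; [|split]; simpl; try tauto. constructor.
  - apply in_flat_map in H as [p0 [Hp0 H]]. destruct (IH _ Hp0) as [H1 [H2 H3]].
    destruct H as [H|H].
    + subst. split; [|split].
      * intros b Hb; apply in_app_or in Hb as [Hb|[Hb|[]]]; subst; auto. discriminate.
      * intros b x Hb Hx; apply in_app_or in Hb as [Hb|[Hb|[]]]; subst.
        specialize (H2 _ _ Hb Hx); lia. destruct Hx as [Hx|[]]; lia.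
      * rewrite concat_app; simpl. apply NoDup_app; auto.
        repeat constructor; auto. intros x Hx Hx'. destruct Hx' as [Hx'|[]]; subst.
        apply in_concat in Hx as [b [Hb Hx]]. specialize (H2 _ _ Hb Hx); lia.
    + apply in_map_iff in H as [j [Hj Hjs]]. apply in_seq in Hjs. subst. split; [|split].
      * intros b Hb; apply add_to_block_in in Hb as [Hb|[b0 [Hb0 Hb]]]; auto.
        subst; destruct b0; discriminate.
      * intros b x Hb Hx; apply add_to_block_in in Hb as [Hb|[b0 [Hb0 Hb]]].
        specialize (H2 _ _ Hb Hx); lia. subst. apply in_app_or in Hx as [Hx|[Hx|[]]].
        specialize (H2 _ _ Hb0 Hx); lia. lia.
      * eapply Permutation_NoDup. apply Permutation_sym, add_to_block_concat; lia.
        constructor; auto. intro Hx. apply in_concat in Hx as [b [Hb Hx]]. specialize (H2 _ _ Hb Hx); lia.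
Qed.

Lemma NC_sp n p : In p (NC n) -> In p (set_partitions n).
Proof. unfold NC; intro H; apply filter_In in H; tauto. Qed.

Lemma block_len n p b : pinv n p -> In b p -> finer (one_n n) p = false -> 1 <= length b < n.
Proof.
  intros [H1 [H2 H3]] Hb Hf. assert (Hnd : NoDup b).
  { clear -H3 Hb. induction p; simpl in *. tauto. apply NoDup_app_remove_r in H3 as H3'.
    destruct Hb; subst; auto. apply IHp; auto. apply NoDup_app_remove_l in H3; auto. }
  assert (Hinc : incl b (seq 0 n)). { intros x Hx; apply in_seq; specialize (H2 _ _ Hb Hx); lia. }
  split. destruct b; simpl; [now elim (H1 [] Hb)|lia].
  assert (length b <= n) by (rewrite <- (length_seq n 0); apply NoDup_incl_length; auto).
  destruct (Nat.eq_dec (length b) n); [|lia]. exfalso.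
  assert (incl (seq 0 n) b) by (apply NoDup_length_incl; auto; rewrite length_seq; lia).
  enough (finer (one_n n) p = true) by congruence.
  apply finer_spec. intros b' Hb'. destruct Hb' as [Hb'|[]]; subst. exists b; split; auto.
  apply incl_b_spec; auto.
Qed.

Definition allsing (p : partition) : bool := forallb (fun b => Nat.eqb (length b) 1) p.
Definition gsing (p : partition) : CC := if allsing p then C1 else C0.

Lemma allsing_app p q : allsing (p ++ q) = (allsing p && allsing q)%bool.
Proof. unfold allsing; apply forallb_app. Qed.

Lemma allsing_add j x p : pinv 0 [] -> (forall b, In b p -> b <> []) -> j < length p -> allsing (add_to_block j x p) = false.
Proof.
  intros _ Hne; revert j; induction p as [|b p IH]; intros j Hj; simpl in *. lia.
  destruct j; simpl. rewrite length_app; simpl. destruct b. now elim (Hne [] (or_introl eq_refl)).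
  simpl. replace (length b + 1) with (S (length b)) by lia. destruct (length b); reflexivity.
  rewrite IH; [apply andb_false_r|auto|lia].
Qed.

Lemma sum_gsing n : Csum (map gsing (set_partitions n)) = C1.
Proof.
  induction n as [|m IH]; [cbn; ring|].
  simpl. rewrite Csum_flat_map. rewrite <- IH. apply Csum_map_ext. intros p Hp.
  destruct (sp_inv _ _ Hp) as [Hne _]. simpl. rewrite Csum_map_zero.
  - unfold gsing. rewrite allsing_app. simpl. rewrite andb_true_r. ring.
  - intros q Hq. apply in_map_iff in Hq as [j [Hj Hjs]]; subst. apply in_seq in Hjs.
    unfold gsing. rewrite allsing_add; auto. split; [|split]; simpl; try tauto; constructor. lia.
Qed.

Lemma crossing_single_l a c : crossing_pair [a] c = false.
Proof. apply Bool.not_true_is_false; intro H; apply crossing_spec in H.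
  destruct H as [a' [x [d [y [H1 [_ [H3 [_ [? [? ?]]]]]]]]]]. destruct H1 as [H1|[]], H3 as [H3|[]]; lia. Qed.
Lemma crossing_single_r a b : crossing_pair b [a] = false.
Proof. apply Bool.not_true_is_false; intro H; apply crossing_spec in H.
  destruct H as [a' [x [d [y [_ [H1 [_ [H3 [? [? ?]]]]]]]]]]. destruct H1 as [H1|[]], H3 as [H3|[]]; lia. Qed.

Lemma allsing_nth p i : allsing p = true -> i < length p -> exists a, nth i p [] = [a].
Proof.
  intros H Hi. unfold allsing in H. rewrite forallb_forall in H.
  specialize (H _ (nth_In p [] Hi)). apply Nat.eqb_eq in H.
  destruct (nth i p []) as [|a [|]]; simpl in H; try discriminate. eauto.
Qed.

Lemma allsing_nc p : allsing p = true -> noncrossing p = true.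
Proof.
  intro H; apply noncrossing_spec; intros i j Hi _ _.
  destruct (allsing_nth _ H Hi) as [a E]; rewrite E; apply crossing_single_l.
Qed.

Lemma allsing_not_one n p : 2 <= n -> allsing p = true -> finer (one_n n) p = false.
Proof.
  intros Hn H. apply Bool.not_true_is_false; intro F; rewrite finer_spec in F.
  destruct (F (seq 0 n) (or_introl eq_refl)) as [c [Hc Hi]].
  unfold allsing in H; rewrite forallb_forall in H. specialize (H _ Hc). apply Nat.eqb_eq in H.
  rewrite incl_b_spec in Hi. destruct c as [|a [|]]; simpl in H; try discriminate.
  assert (H0 := Hi 0 ltac:(apply in_seq; lia)). assert (H1 := Hi 1 ltac:(apply in_seq; lia)).
  destruct H0 as [H0|[]], H1 as [H1|[]]; lia.
Qed.

Lemma sum_gsing_NC n : 2 <= n ->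
  Csum (map gsing (filter (fun p => negb (finer (one_n n) p)) (NC n))) = C1.
Proof.
  intro Hn. rewrite <- (sum_gsing n). unfold NC.
  generalize (set_partitions n). intro l. induction l as [|p l IH]; [reflexivity|].
  cbn [filter]. destruct (allsing p) eqn:E.
  - rewrite (allsing_nc _ E). cbn [filter]. rewrite (allsing_not_one _ Hn E). cbn [negb map].
    unfold Csum in *; cbn [fold_right]. rewrite IH; reflexivity.
  - assert (H : gsing p = C0) by (unfold gsing; rewrite E; auto).
    destruct (noncrossing p); cbn [filter]; [destruct (finer (one_n n) p); cbn [negb]|];
    cbn [map]; unfold Csum in *; cbn [fold_right]; rewrite ?IH, ?H; ring.
Qed.

Section Ones.
Variable Sp : StarProbSpace.
Definition ones (m : nat) : list Sp := repeat (@a_one Sp) m.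

Lemma sub_ones m V : @sub Sp (ones m) V = ones (length V).
Proof. unfold sub, ones. rewrite <- map_const. apply map_ext. intro; apply nth_repeat. Qed.

Lemma aprod_ones m : @aprod Sp (ones m) = @a_one Sp.
Proof. induction m; simpl; auto. unfold aprod in *; simpl. unfold ones in IHm. rewrite IHm. apply ax_mul_1l. Qed.

Lemma Cprod_ind p : Cprod (map (fun V => if Nat.eqb (length V) 1 then C1 else C0) p) = gsing p.
Proof.
  unfold gsing, allsing. induction p as [|b p IH]; simpl. reflexivity.
  rewrite IH. destruct (length b =? 1), (forallb _ p); simpl; ring.
Qed.

Lemma kappa_ones f m : 1 <= m <= f -> @kappa_f Sp f (ones m) = if Nat.eqb m 1 then C1 else C0.
Proof.
  revert m; induction f as [|f IH]; intros m Hm. lia.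
  cbn [kappa_f]. replace (length (ones m)) with m by (unfold ones; rewrite repeat_length; auto).
  rewrite aprod_ones, ax_tau_one.
  rewrite (Csum_map_ext _ gsing).
  2:{ intros p Hp. apply filter_In in Hp as [Hp Hf]. apply negb_true_iff in Hf.
      rewrite <- Cprod_ind. f_equal. apply map_ext_in. intros V HV.
      rewrite sub_ones. apply IH. pose proof (@block_len m p V (sp_inv _ _ (NC_sp _ _ Hp)) HV Hf). lia. }
  destruct (Nat.eq_dec m 1).
  - subst. replace (filter (fun p => negb (finer (one_n 1) p)) (NC 1)) with (@nil partition) by reflexivity.
    cbn. apply Ceq; simpl; ring.
  - rewrite sum_gsing_NC by lia. destruct (Nat.eqb_spec m 1); [lia|]. apply Ceq; simpl; ring.
Qed.

Lemma kappa_ones2 m : 2 <= m -> @kappa Sp (ones m) = C0.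
Proof. intro. unfold kappa, ones; rewrite repeat_length. fold (ones m). rewrite kappa_ones by lia.
  destruct (Nat.eqb_spec m 1); auto; lia. Qed.
End Ones.

Lemma chains_shape n fuel p ch : In ch (chains_from n fuel p) ->
  exists q rest, ch = q :: rest /\ In q (NC n) /\ strictly_finer p q = true.
Proof.
  revert p ch; induction fuel as [|f IH]; intros p ch H; cbn [chains_from] in H. destruct H.
  apply in_flat_map in H as [q [Hq H]]. destruct (strictly_finer p q) eqn:E; [|destruct H].
  destruct (finer (one_n n) q).
  - destruct H as [H|[]]. subst; eauto.
  - apply in_map_iff in H as [r [Hr _]]. subst; eauto.
Qed.

Lemma crossing_map f b c : (forall a x, a < x <-> f a < f x) ->
  crossing_pair (map f b) (map f c) = true -> crossing_pair b c = true.
Proof.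
  intros Hf H. apply crossing_spec in H as [a [x [d [y [Ha [Hx [Hd [Hy [H1 [H2 H3]]]]]]]]]].
  apply in_map_iff in Ha as [a' [<- Ha]]. apply in_map_iff in Hx as [x' [<- Hx]].
  apply in_map_iff in Hd as [d' [<- Hd]]. apply in_map_iff in Hy as [y' [<- Hy]].
  apply crossing_spec. exists a', x', d', y'. repeat split; auto; apply Hf; auto.
Qed.

Lemma interleave_nc n q : noncrossing q = true -> noncrossing (interleave (zero_n n) q) = true.
Proof.
  intro Hq. rewrite noncrossing_spec in *. unfold interleave, zero_n.
  set (X := map (map (fun i => 2 * i)) (map (fun i => [i]) (seq 0 n))).
  assert (HX : forall i, i < length X -> exists a, nth i X [] = [a]).
  { intros i Hi. unfold X in *. rewrite !length_map, length_seq in Hi.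
    rewrite map_map. exists (2 * i). 
    rewrite (nth_indep _ [] ((fun x => map (fun i => 2 * i) [x]) 0)) by (rewrite length_map, length_seq; auto).
    rewrite (map_nth (fun x : nat => map (fun i0 : nat => 2 * i0) [x])), seq_nth by auto. reflexivity. }
  intros i j Hi Hj Hij. rewrite length_app in Hi, Hj.
  destruct (Nat.lt_ge_cases i (length X)) as [Hi'|Hi'].
  { rewrite app_nth1 by auto. destruct (HX _ Hi') as [a ->]. apply crossing_single_l. }
  destruct (Nat.lt_ge_cases j (length X)) as [Hj'|Hj'].
  { rewrite (app_nth1 _ _ _ Hj'). destruct (HX _ Hj') as [a ->]. apply crossing_single_r. }
  rewrite !app_nth2 by auto. rewrite length_map in Hi, Hj.
  change [] with (map (fun i => 2 * i + 1) []). rewrite !map_nth.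
  apply Bool.not_true_is_false; intro H. apply crossing_map in H; [|intros; lia].
  rewrite (Hq (i - length X) (j - length X)) in H by lia. discriminate.
Qed.

Lemma finer_refl p : finer p p = true.
Proof. apply finer_spec; intros b Hb; exists b; split; auto. apply incl_b_spec; auto. Qed.

Lemma kreweras_zero n q : 1 <= n -> In q (NC n) -> strictly_finer (zero_n n) q = true ->
  exists c, In c (kreweras n q (zero_n n)) /\ 2 <= length c.
Proof.
  intros Hn Hq Hs. unfold strictly_finer in Hs. apply andb_prop in Hs as [Hzq Hqz].
  apply negb_true_iff in Hqz.
  assert (Hok : krew_ok q (zero_n n) q = true).
  { unfold krew_ok. rewrite Hzq, finer_refl. simpl. apply interleave_nc.
    unfold NC in Hq. apply filter_In in Hq; tauto. }
  unfold kreweras.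
  destruct (find _ (NC n)) as [r|] eqn:E.
  - apply find_some in E as [Hr E]. apply andb_prop in E as [_ E]. rewrite forallb_forall in E.
    specialize (E q Hq). rewrite Hok in E. simpl in E.
    assert (exists b, In b q /\ forall c, In c (zero_n n) -> incl_b b c = false) as [b [Hb Hbz]].
    { apply NNPP; intro N. assert (finer q (zero_n n) = true); [|congruence].
      apply finer_spec. intros b Hb. apply NNPP; intro N2. apply N. exists b; split; auto.
      intros c Hc. apply Bool.not_true_is_false. intro. apply N2; eauto. }
    rewrite finer_spec in E. destruct (E b Hb) as [c [Hc Hbc]]. exists c; split; auto.
    destruct (sp_inv _ _ (NC_sp _ _ Hr)) as [_ [Hlt _]].
    destruct c as [|x [|y c]]; simpl; try lia.
    + exfalso. rewrite incl_b_spec in Hbc.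
      assert (H0 : incl_b b [0] = true) by (apply incl_b_spec; intros z Hz; destruct (Hbc z Hz)).
      rewrite Hbz in H0. discriminate.
      unfold zero_n. apply in_map_iff. exists 0; split; auto. apply in_seq; lia.
    + exfalso. specialize (Hbz [x]). rewrite Hbc in Hbz. enough (true = false) by discriminate.
      apply Hbz. unfold zero_n. apply in_map_iff. exists x; split; auto. apply in_seq.
      specialize (Hlt _ x Hc (or_introl eq_refl)). lia.
  - exfalso. apply find_none with (x := q) in E; auto. rewrite Hok in E. simpl in E.
    assert (Hall : forallb (fun rho' => negb (krew_ok q (zero_n n) rho') || finer rho' q) (NC n) = true).
    { apply forallb_forall. intros rho _. unfold krew_ok.
      destruct (finer rho q); rewrite ?andb_false_r, ?andb_true_r, ?orb_true_r; reflexivity. }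
    congruence.
Qed.

Lemma Cprod_zero {T} (f : T -> CC) l x : In x l -> f x = C0 -> Cprod (map f l) = C0.
Proof.
  intros Hx Hf. induction l as [|y l IH]; simpl in *. tauto. destruct Hx as [->|Hx].
  rewrite Hf; ring. rewrite IH by auto; ring.
Qed.

Lemma Lkappa_unit_ones Sp n : 2 <= n -> @Lkappa_unit Sp (ones Sp n) = C0.
Proof.
  intro Hn. unfold Lkappa_unit. replace (length (ones Sp n)) with n by (unfold ones; rewrite repeat_length; auto).
  apply Csum_map_zero. intros ch Hch.
  destruct (chains_shape _ _ _ _ Hch) as [q [rest [-> [Hq Hs]]]].
  cbn [combine map Cprod fold_right fst snd].
  destruct (@kreweras_zero n q ltac:(lia) Hq Hs) as [c [Hc Hlc]].
  unfold Cprod at 2. cbn [fold_right]. fold Cprod.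
  rewrite (@Cprod_zero _ _ _ c Hc). ring. rewrite sub_ones. apply kappa_ones2; auto.
Qed.

Fixpoint incr (l : list nat) : Prop :=
  match l with [] => True | a :: t => (forall y, In y t -> a < y) /\ incr t end.

Lemma sublists_props (l : list nat) s : In s (sublists l) -> incr l -> incr s /\ incl s l.
Proof.
  revert s; induction l as [|x t IH]; intros s Hs Hl; simpl in Hs.
  - destruct Hs as [<-|[]]. split; simpl; auto. intros y [].
  - destruct Hl as [Hx Ht]. apply in_app_or in Hs as [Hs|Hs].
    + apply in_map_iff in Hs as [s' [<- Hs']]. destruct (IH _ Hs' Ht) as [H1 H2].
      split. split; auto.
      intros y [<-|Hy]; [left; auto|right; apply H2, Hy].
    + destruct (IH _ Hs Ht). split; auto. intros y Hy; right; auto.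
Qed.

Lemma incr_seq a n : incr (seq a n).
Proof. revert a; induction n; intro a; simpl; auto. split; auto. intros y Hy; apply in_seq in Hy; lia. Qed.

Lemma sub_seq_props n s : In s (sublists (seq 0 n)) -> incr s /\ (forall x, In x s -> x < n).
Proof. intro H. destruct (@sublists_props _ _ H (incr_seq 0 n)). split; auto. intros x Hx; apply H1, in_seq in Hx; lia. Qed.

Lemma firstn_add {T} m k (l : list T) : firstn (m + k) l = firstn m l ++ firstn k (skipn m l).
Proof. revert l; induction m; intros l; simpl; auto. destruct l; simpl. destruct k; auto. f_equal; auto. Qed.

Section Keys.
Variable I : Type.

Definition chunks (w : list I) (ks : list nat) : list (list I) :=
  map (fun ab => firstn (snd ab - fst ab) (skipn (fst ab) w)) (combine ks (tl ks)).
Definition keyof (w : list I) (ks : list nat) : key I :=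
  (firstn (hd 0 ks) w ++ skipn (last ks 0) w, chunks w ks).
Definition letters (k : key I) : list I := fst k ++ concat (snd k).

Lemma last_in (a : nat) t : In (last (a :: t) 0) (a :: t).
Proof. revert a; induction t as [|b t IH]; intros a. left; auto. right. apply IH. Qed.

Lemma hd_le_last a t : incr (a :: t) -> a <= last (a :: t) 0.
Proof.
  intro Hi. pose proof (last_in a t) as H. destruct H as [H|H]. lia.
  destruct Hi as [Hi _]. specialize (Hi _ H). lia.
Qed.

Lemma chunks_concat w a t : incr (a :: t) -> (forall x, In x (a :: t) -> x < length w) ->
  concat (chunks w (a :: t)) = firstn (last (a :: t) 0 - a) (skipn a w).
Proof.
  revert a; induction t as [|b t IH]; intros a Hi Hb.
  - simpl. rewrite Nat.sub_diag; reflexivity.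
  - change (firstn (b - a) (skipn a w) ++ concat (chunks w (b :: t)) = firstn (last (a :: b :: t) 0 - a) (skipn a w)).
    destruct Hi as [Hab Hi].
    assert (a < b) by (apply Hab; left; auto).
    assert (Hl := hd_le_last Hi).
    rewrite IH; [|auto|intros; apply Hb; right; auto]. replace (last (a :: b :: t) 0) with (last (b :: t) 0) by reflexivity.
    replace (last (b :: t) 0 - a) with ((b - a) + (last (b :: t) 0 - b)) by lia.
    rewrite firstn_add, skipn_skipn. f_equal. f_equal. f_equal. lia.
Qed.

Lemma keyof_perm w ks : In ks (sublists (seq 0 (length w))) -> ks <> [] ->
  Permutation (letters (keyof w ks)) w.
Proof.
  intros Hks Hne. destruct (sub_seq_props _ _ Hks) as [Hi Hb].
  destruct ks as [|a t]; [congruence|]. unfold letters, keyof; cbn [fst snd hd].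
  rewrite chunks_concat by auto. pose proof (hd_le_last Hi) as Hle.
  set (L := last (a :: t) 0) in *.
  rewrite <- app_assoc. rewrite <- (firstn_skipn a w) at 4. apply Permutation_app_head.
  rewrite <- (firstn_skipn (L - a) (skipn a w)) at 2. rewrite skipn_skipn.
  replace (L - a + a) with L by lia. apply Permutation_app_comm.
Qed.

Lemma chunks_len w ks : length (chunks w ks) = length ks - 1.
Proof. unfold chunks. rewrite length_map, length_combine. destruct ks; [reflexivity|]. cbn [tl length]. rewrite Nat.min_r; lia. Qed.

Lemma chunks_ne w ks : incr ks -> (forall x, In x ks -> x < length w) ->
  forall M, In M (chunks w ks) -> M <> [].
Proof.
  intros Hi Hb M HM. unfold chunks in HM. apply in_map_iff in HM as [[a b] [<- Hab]].
  cbn [fst snd]. destruct ks as [|k t]; [destruct Hab|]. cbn [tl] in Hab.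
  assert (a < b /\ a < length w) as [H1 H2].
  { clear -Hi Hb Hab. revert k Hi Hb Hab; induction t as [|c t IH]; intros k Hi Hb Hab. destruct Hab.
    cbn [combine] in Hab. destruct Hab as [E|Hab].
    - inversion E; subst. split. apply (proj1 Hi); left; auto. apply Hb; left; auto.
    - apply (IH c); auto. apply Hi. intros; apply Hb; right; auto. }
  intro E. apply (f_equal (@length I)) in E. rewrite length_firstn, length_skipn in E. simpl in E. lia.
Qed.

Lemma keyof_single w k : keyof w [k] = (w, []).
Proof. unfold keyof, chunks; simpl. rewrite firstn_skipn. reflexivity. Qed.

Lemma keyof_fst_ne w ks : In ks (sublists (seq 0 (length w))) -> ks <> [] -> fst (keyof w ks) <> [].
Proof.
  intros Hks Hne. destruct (sub_seq_props _ _ Hks) as [Hi Hb].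
  destruct ks as [|a t]; [congruence|]. unfold keyof; cbn [fst].
  assert (last (a :: t) 0 < length w) by (apply Hb, last_in).
  intro E. apply (f_equal (@length I)) in E. rewrite length_app, length_skipn in E. cbn [length] in E. lia.
Qed.

Lemma keyof_valid w ks : In ks (sublists (seq 0 (length w))) -> forall M, In M (snd (keyof w ks)) -> M <> [].
Proof. intros Hks. destruct (sub_seq_props _ _ Hks) as [Hi Hb]. apply chunks_ne; auto. Qed.
End Keys.

Lemma map_flat_map' {A B D} (f : B -> D) (g : A -> list B) l :
  map f (flat_map g l) = flat_map (fun x => map f (g x)) l.
Proof. induction l; simpl; auto. rewrite map_app, IHl; auto. Qed.

Lemma perm_concat {T} (l l' : list (list T)) : Permutation l l' -> Permutation (concat l) (concat l').
Proof.
  induction 1; simpl; auto. apply Permutation_app_head; auto.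
  rewrite !app_assoc. apply Permutation_app_tail, Permutation_app_comm.
  eapply perm_trans; eauto.
Qed.

Lemma nth_seq_map {T} (l : list T) d : map (fun i => nth i l d) (seq 0 (length l)) = l.
Proof.
  induction l; simpl; auto. f_equal. rewrite <- seq_shift, map_map. simpl. auto.
Qed.

Section Ops.
Variable Sp : StarProbSpace.
Variable I : Type.

Definition gam (Cf : I -> Sp) (w : list I) (ks : list nat) : CC :=
  @Lkappa Sp (map (fun k => nth k (map Cf w) (@a_one Sp)) ks).

Definition ent : Type := (list I * list nat * key I)%type.

Definition skm (w : list I) : list ent :=
  flat_map (fun ks => match ks with [] => [] | _ :: _ => [(w, ks, keyof w ks)] end)
           (sublists (seq 0 (length w))).

Definition trpart (k : key I) : list (list I) :=
  match fst k with [] => snd k | Mh :: Mt => (Mh :: Mt) :: snd k end.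
Definition rem {T} (j : nat) (l : list T) := firstn j l ++ skipn (S j) l.

Definition skel (k : key I) : list ent :=
  map (fun s => (fst s, (fst (snd s), snd (snd s) ++ snd k))) (skm (fst k)) ++
  flat_map (fun j => map (fun s => (fst s, (fst k ++ [], rem j (snd k) ++ trpart (snd s))))
                         (skm (nth j (snd k) []))) (seq 0 (length (snd k))).

Definition gs (Cf : I -> Sp) (s : ent) : CC := gam Cf (fst (fst s)) (snd (fst s)).

Lemma D_mono_skm Cf w : @D_mono Sp I Cf w = map (fun s => (gs Cf s, snd s)) (skm w).
Proof.
  unfold D_mono, skm. rewrite map_flat_map'. apply flat_map_ext. intros [|k t]; reflexivity.
Qed.

Lemma D_key_skel Cf k : @D_key Sp I Cf k = map (fun s => (gs Cf s, snd s)) (skel k).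
Proof.
  unfold D_key, skel, tr_tpoly. rewrite !D_mono_skm, map_app, !map_map. f_equal.
  rewrite map_flat_map'. apply flat_map_ext. intro j. rewrite !D_mono_skm, !map_map. reflexivity.
Qed.

Lemma keq_refl (k : key I) : key_equiv k k.
Proof. split; auto. Qed.
Lemma keq_sym (k1 k2 : key I) : key_equiv k1 k2 -> key_equiv k2 k1.
Proof. intros [H1 H2]; split; auto. apply Permutation_sym; auto. Qed.
Lemma keq_trans (k1 k2 k3 : key I) : key_equiv k1 k2 -> key_equiv k2 k3 -> key_equiv k1 k3.
Proof. intros [H1 H2] [H3 H4]; split; [congruence|eapply perm_trans; eauto]. Qed.
Lemma keq_letters (k1 k2 : key I) : key_equiv k1 k2 -> Permutation (letters k1) (letters k2).
Proof. intros [H1 H2]. unfold letters. rewrite H1. apply Permutation_app_head, perm_concat; auto. Qed.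
Lemma keq_len (k1 k2 : key I) : key_equiv k1 k2 -> length (snd k1) = length (snd k2).
Proof. intros [_ H]; apply Permutation_length; auto. Qed.

Definition resp (H : key I -> CC) := forall k1 k2, key_equiv k1 k2 -> H k1 = H k2.

Definition ind (k0 k : key I) : CC := if excluded_middle_informative (key_equiv k0 k) then C1 else C0.

Lemma ind_resp k0 : resp (ind k0).
Proof.
  intros k1 k2 E. unfold ind. destruct (excluded_middle_informative (key_equiv k0 k1)),
   (excluded_middle_informative (key_equiv k0 k2)); auto.
  elim n; eapply keq_trans; eauto. elim n; eapply keq_trans; eauto using keq_sym.
Qed.

Lemma coeff_eq (u : tpoly I) k : coeff u k = Csum (map (fun ck => Cmul (fst ck) (ind k (snd ck))) u).
Proof. unfold coeff, ind. apply Csum_map_ext. intros ck _. destruct excluded_middle_informative; ring. Qed.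

Definition W (G : key I -> CC) (u : tpoly I) := Csum (map (fun ck => Cmul (fst ck) (G (snd ck))) u).

Lemma W_app G u1 u2 : W G (u1 ++ u2) = Cadd (W G u1) (W G u2).
Proof. unfold W. rewrite map_app, Csum_app; auto. Qed.

Definition SK (Cf : I -> Sp) (H : key I -> CC) (k : key I) : CC :=
  Csum (map (fun s => Cmul (gs Cf s) (H (snd s))) (skel k)).

Lemma coeff_Dop Cf u k :
  coeff (@Dop Sp I Cf u) k = W (SK Cf (ind k)) u.
Proof.
  rewrite coeff_eq. unfold Dop, W. rewrite Csum_flat_map. apply Csum_map_ext. intros ck _.
  rewrite D_key_skel, !map_map. unfold SK. rewrite <- Csum_map_mul. apply Csum_map_ext.
  intros; simpl; ring.
Qed.

Lemma W_Dop Cf G u : W G (@Dop Sp I Cf u) = W (SK Cf G) u.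
Proof.
  unfold Dop, W. rewrite Csum_flat_map. apply Csum_map_ext. intros ck _.
  rewrite D_key_skel, !map_map. unfold SK. rewrite <- Csum_map_mul. apply Csum_map_ext.
  intros; simpl; ring.
Qed.

Lemma coeff_W u k : coeff u k = W (ind k) u.
Proof. apply coeff_eq. Qed.

Definition filt (k0 : key I) (u : tpoly I) :=
  filter (fun ck => if excluded_middle_informative (key_equiv k0 (snd ck)) then false else true) u.

Lemma W_split G (HG : resp G) k0 u : W G u = Cadd (Cmul (coeff u k0) (G k0)) (W G (filt k0 u)).
Proof.
  rewrite coeff_eq. unfold W. induction u as [|ck u IH]; simpl. ring.
  unfold ind at 1. destruct (excluded_middle_informative (key_equiv k0 (snd ck))) as [E|E]; simpl.
  - rewrite IH, (HG _ _ (keq_sym E)). ring.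
  - rewrite IH. ring.
Qed.

Lemma coeff_filt k0 u k : coeff (filt k0 u) k = if excluded_middle_informative (key_equiv k k0) then C0 else coeff u k.
Proof.
  rewrite !coeff_eq. induction u as [|ck u IH]; simpl. destruct excluded_middle_informative; auto.
  destruct (excluded_middle_informative (key_equiv k0 (snd ck))) as [E|E]; simpl.
  - rewrite IH. destruct (excluded_middle_informative (key_equiv k k0)) as [E2|E2]; auto.
    unfold ind at 2. destruct (excluded_middle_informative (key_equiv k (snd ck))) as [E3|E3].
    elim E2; eapply keq_trans; eauto using keq_sym. ring.
  - rewrite IH. destruct (excluded_middle_informative (key_equiv k k0)) as [E2|E2]; auto.
    unfold ind at 1. destruct (excluded_middle_informative (key_equiv k (snd ck))) as [E3|E3].
    elim E; eapply keq_trans; eauto using keq_sym. ring.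
Qed.

Lemma filt_le k0 u : length (filt k0 u) <= length u.
Proof. apply filter_length_le. Qed.

Lemma filt_lt ck u : length (filt (snd ck) (ck :: u)) < length (ck :: u).
Proof.
  unfold filt; simpl. destruct excluded_middle_informative as [_|E]. simpl. pose proof (filter_length_le
   (fun ck0 => if excluded_middle_informative (key_equiv (snd ck) (snd ck0)) then false else true) u). lia.
  elim E; apply keq_refl.
Qed.

Lemma W_resp G (HG : resp G) u u' : tp_eq u u' -> W G u = W G u'.
Proof.
  remember (length u + length u') as n. assert (Hn : length u + length u' <= n) by lia. clear Heqn.
  revert u u' Hn. induction n as [n IH] using lt_wf_ind. intros u u' Hn E.
  assert (Hstep : forall k0, length (filt k0 u) + length (filt k0 u') < length u + length u' -> W G u = W G u').
  { intros k0 Hlt. rewrite (W_split HG k0 u), (W_split HG k0 u'), (E k0). f_equal.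
    apply (IH (length (filt k0 u) + length (filt k0 u'))); [lia|lia|].
    intro k. rewrite !coeff_filt. destruct excluded_middle_informative; auto. }
  destruct u as [|ck u].
  - destruct u' as [|ck' u']. reflexivity.
    apply (Hstep (snd ck')). pose proof (filt_lt ck' u'). replace (length (filt (snd ck') [])) with 0 by reflexivity. cbn [length] in *. lia.
  - apply (Hstep (snd ck)). pose proof (filt_lt ck u). pose proof (filt_le (snd ck) u'). lia.
Qed.

End Ops.
Arguments gam {Sp I}. Arguments gs {Sp I}. Arguments SK {Sp I}.

Section Tsum.
Variable T : Type.
Variable d : T.
Definition Tsum (Phi : T -> list T -> CC) (l : list T) : CC :=
  Csum (map (fun j => Phi (nth j l d) (rem j l)) (seq 0 (length l))).

Lemma Tsum_cons Phi x l : Tsum Phi (x :: l) = Cadd (Phi x l) (Tsum (fun M R => Phi M (x :: R)) l).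
Proof.
  unfold Tsum. cbn [length seq map]. unfold Csum at 1; cbn [fold_right]. fold Csum. f_equal.
  rewrite <- seq_shift, map_map. reflexivity.
Qed.

Lemma Tsum_ext Phi Phi' l : (forall M R, Phi M R = Phi' M R) -> Tsum Phi l = Tsum Phi' l.
Proof. intro H; unfold Tsum; apply Csum_map_ext; auto. Qed.

Lemma Tsum_perm l l' : Permutation l l' -> forall Phi, (forall M R R', Permutation R R' -> Phi M R = Phi M R') ->
  Tsum Phi l = Tsum Phi l'.
Proof.
  induction 1; intros Phi HP.
  - reflexivity.
  - rewrite !Tsum_cons. rewrite (HP x l l' H). f_equal. apply IHPermutation. intros; apply HP; auto.
  - rewrite !Tsum_cons.
    rewrite (Tsum_ext (fun M R => Phi M (y :: x :: R)) (fun M R => Phi M (x :: y :: R))).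
    ring. intros; apply HP, perm_swap.
  - rewrite IHPermutation1, IHPermutation2; auto.
Qed.

Lemma Tsum_sum (f : T -> CC) l : Tsum (fun M _ => f M) l = Csum (map f l).
Proof. unfold Tsum. rewrite <- (map_map (fun j => nth j l d) f), nth_seq_map. reflexivity. Qed.

Lemma rem_perm j (l : list T) : j < length l -> Permutation l (nth j l d :: rem j l).
Proof.
  intro Hj. unfold rem. rewrite <- (firstn_skipn j l) at 1.
  assert (skipn j l = nth j l d :: skipn (S j) l).
  { revert j Hj; induction l; intros j Hj; simpl in *. lia. destruct j; auto. apply IHl; lia. }
  rewrite H. apply Permutation_sym, Permutation_middle.
Qed.
End Tsum.

Section Props.
Variable Sp : StarProbSpace.
Variable I : Type.

Lemma SK_split (Cf : I -> Sp) H M0 Ts :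
  SK Cf H (M0, Ts) = Cadd (Csum (map (fun s => Cmul (gs Cf s) (H (fst (snd s), snd (snd s) ++ Ts))) (skm M0)))
    (Tsum [] (fun M R => Csum (map (fun s => Cmul (gs Cf s) (H (M0 ++ [], R ++ trpart (snd s)))) (skm M))) Ts).
Proof.
  unfold SK, skel. cbn [fst snd]. rewrite map_app, Csum_app, map_map. f_equal.
  rewrite Csum_flat_map. unfold Tsum. apply Csum_map_ext. intros j _. rewrite map_map. reflexivity.
Qed.

Lemma SK_resp' (Cf : I -> Sp) H : resp H -> resp (SK Cf H).
Proof.
  intros HH [M0 Ts] [M0' Ts'] [E1 E2]. cbn [fst snd] in *. subst M0'.
  rewrite !SK_split. f_equal.
  - apply Csum_map_ext. intros s _. f_equal. apply HH. split; auto. apply Permutation_app_head; auto.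
  - apply Tsum_perm; auto. intros M R R' HR. apply Csum_map_ext. intros s _. f_equal. apply HH.
    split; auto. apply Permutation_app_tail; auto.
Qed.
End Props.

Lemma Dop_resp (Sp : StarProbSpace) (I : Type) (Cf : I -> Sp) u u' : tp_eq u u' -> tp_eq (@Dop Sp I Cf u) (@Dop Sp I Cf u').
Proof. intros E k. rewrite !coeff_Dop. apply W_resp; auto. apply SK_resp', ind_resp. Qed.

Lemma sub_only_nil (l : list nat) (h : list nat -> CC) :
  (forall s, s <> [] -> h s = C0) -> Csum (map h (sublists l)) = h [].
Proof.
  intro H. induction l as [|x t IH]; simpl. ring.
  rewrite map_app, Csum_app, IH, map_map, Csum_map_zero. ring. intros; apply H; discriminate.
Qed.

Lemma sublists_single (l : list nat) (h : list nat -> CC) : h [] = C0 ->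
  (forall s, 2 <= length s -> h s = C0) -> Csum (map h (sublists l)) = Csum (map (fun x => h [x]) l).
Proof.
  intros H0 H2. induction l as [|x t IH]; simpl. rewrite H0; ring.
  rewrite map_app, Csum_app, IH, map_map. f_equal.
  apply (sub_only_nil t (fun s => h (x :: s))). intros s Hs. apply H2. destruct s; simpl; [congruence|lia].
Qed.

Lemma skm_sum {I} (w : list I) (F : ent I -> CC) :
  Csum (map F (skm w)) = Csum (map (fun ks => match ks with [] => C0 | _ :: _ => F (w, ks, keyof w ks) end)
     (sublists (seq 0 (length w)))).
Proof.
  unfold skm. rewrite Csum_flat_map. apply Csum_map_ext. intros [|k t] _; simpl; ring.
Qed.

Lemma Csum_concat {T} (f : T -> CC) (L : list (list T)) :
  Csum (map (fun M => Csum (map f M)) L) = Csum (map f (concat L)).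
Proof. induction L; simpl; auto. rewrite map_app, Csum_app, IHL; auto. Qed.

Lemma Cinv_mul z : z <> C0 -> Cmul (Cinv z) z = C1.
Proof.
  destruct z as [x y]; intro Hz. unfold Cinv, Cmul, C1; simpl.
  assert (x * x + y * y <> 0)%R.
  { intro E. apply Hz. assert (x = 0 /\ y = 0)%R as [-> ->] by nra. reflexivity. }
  apply Ceq; simpl; field; auto.
Qed.

Lemma Cinv_C1 : Cinv C1 = C1.
Proof. unfold Cinv, C1; apply Ceq; simpl; field. Qed.

Lemma CLog_C1 : CLog C1 = C0.
Proof.
  unfold CLog, Cmod, Carg, C1; simpl. apply Ceq; simpl.
  replace (1 * 1 + 0 * 0)%R with 1%R by ring. rewrite sqrt_1, ln_1; auto.
  destruct (Rlt_dec 0 1). replace (0/1)%R with 0%R by field. apply atan_0. lra.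
Qed.

Lemma Cmul_C1 z : Cmul z C1 = z.
Proof. ring. Qed.

Section Fam.
Variable Sp : StarProbSpace.
Variable I : Type.

Lemma nth_map2 (R : Sp -> Sp -> Prop) (f g : I -> Sp) (w : list I) k :
  R (a_one Sp) (a_one Sp) -> (forall i, R (f i) (g i)) ->
  R (nth k (map f w) (a_one Sp)) (nth k (map g w) (a_one Sp)).
Proof. intros H1 H2. revert k; induction w; intros [|k]; simpl; auto. Qed.

Lemma nth_map1 (P : Sp -> Prop) (f : I -> Sp) (w : list I) k :
  P (a_one Sp) -> (forall i, P (f i)) -> P (nth k (map f w) (a_one Sp)).
Proof. intros H1 H2. revert k; induction w; intros [|k]; simpl; auto. Qed.

Definition nrm (a : Sp) : Sp := a_scal Sp (Cinv (tau Sp a)) a.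

Lemma Lkappa_long (l : list Sp) : 2 <= length l -> @Lkappa Sp l = @Lkappa_unit Sp (map nrm l).
Proof. destruct l as [|a [|b t]]; simpl; intros; try lia. reflexivity. Qed.

Lemma nrm_one : nrm (a_one Sp) = a_one Sp.
Proof. unfold nrm. rewrite ax_tau_one, Cinv_C1, ax_scal_1. auto. Qed.

Lemma nrm_scal_one c : c <> C0 -> nrm (a_scal Sp c (a_one Sp)) = a_one Sp.
Proof.
  intro Hc. unfold nrm. rewrite ax_tau_scal, ax_tau_one, Cmul_C1, <- ax_scal_mul, Cinv_mul, ax_scal_1; auto.
Qed.

Lemma gam_tau_long (F : I -> Sp) (hF : forall i, tau Sp (F i) <> C0) w ks :
  2 <= length ks -> gam (@tau_fam Sp I F) w ks = C0.
Proof.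
  intro Hk. unfold gam. rewrite Lkappa_long by (rewrite length_map; auto).
  replace (map nrm _) with (ones Sp (length ks)). apply Lkappa_unit_ones; auto.
  unfold ones. rewrite map_map, <- (map_const (a_one Sp) ks). apply map_ext. intro k.
  apply (nth_map1 (fun a => a_one Sp = nrm a)). rewrite nrm_one; auto.
  intro i. unfold tau_fam. rewrite nrm_scal_one; auto.
Qed.

Lemma gam_single (F : I -> Sp) w k : gam F w [k] = CLog (tau Sp (nth k (map F w) (a_one Sp))).
Proof. reflexivity. Qed.

Variable A : I -> Sp.
Hypothesis hA : forall i, tau Sp (A i) <> C0.

Lemma tau_nA i : tau Sp (@norm_fam Sp I A i) = C1.
Proof. unfold norm_fam. rewrite ax_tau_scal. apply Cinv_mul; auto. Qed.

Lemma gam_n_single w k : gam (@norm_fam Sp I A) w [k] = C0.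
Proof.
  rewrite gam_single. apply (nth_map1 (fun a => CLog (tau Sp a) = C0)).
  rewrite ax_tau_one; apply CLog_C1. intro i; rewrite tau_nA; apply CLog_C1.
Qed.

Lemma gam_split w ks : ks <> [] -> gam A w ks = Cadd (gam (@tau_fam Sp I A) w ks) (gam (@norm_fam Sp I A) w ks).
Proof.
  intro Hne. destruct ks as [|k [|k' t]]; [congruence| |].
  - rewrite gam_n_single, !gam_single.
    rewrite (nth_map2 (fun a b => CLog (tau Sp a) = CLog (tau Sp b)) A (@tau_fam Sp I A) w k); auto.
    ring. intro i. unfold tau_fam. rewrite ax_tau_scal, ax_tau_one, Cmul_C1. auto.
  - rewrite (@gam_tau_long A hA) by (simpl; lia). unfold gam.
    rewrite !Lkappa_long by (simpl; lia). rewrite !map_map.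
    rewrite (map_ext (fun x => nrm (nth x (map A w) (a_one Sp))) (fun x => nrm (nth x (map (@norm_fam Sp I A) w) (a_one Sp)))).
    ring. intro x. apply (nth_map2 (fun a b => nrm a = nrm b)); auto.
    intro i. unfold nrm at 2. rewrite tau_nA, Cinv_C1, ax_scal_1. reflexivity.
Qed.
End Fam.

Section Diag.
Variable Sp : StarProbSpace.
Variable I : Type.
Variable Cf : I -> Sp.
Hypothesis Hz : forall w ks, 2 <= length ks -> gam Cf w ks = C0.

Definition lam (k : key I) : CC := Csum (map (fun x => CLog (tau Sp (Cf x))) (letters k)).

Lemma skm_diag (w : list I) (F : key I -> CC) c :
  (forall x, In x (seq 0 (length w)) -> F (keyof w [x]) = c) ->
  Csum (map (fun s => Cmul (gs Cf s) (F (snd s))) (skm w)) =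
  Cmul (Csum (map (fun x => CLog (tau Sp (Cf x))) w)) c.
Proof.
  intro HF. rewrite skm_sum, sublists_single; [| reflexivity |].
  2:{ intros [|a s] Hs; [reflexivity|]. cbn [fst snd]. unfold gs; cbn [fst snd]. rewrite Hz; auto. ring. }
  rewrite (Csum_map_ext _ (fun x => Cmul c (CLog (tau Sp (nth x (map Cf w) (a_one Sp)))))).
  2:{ intros x Hx. cbn [snd]. rewrite HF by auto. unfold gs; cbn [fst snd]. rewrite gam_single. ring. }
  rewrite Csum_map_mul.
  rewrite <- (map_map (fun x => nth x (map Cf w) (a_one Sp)) (fun a => CLog (tau Sp a))).
  replace (length w) with (length (map Cf w)) by apply length_map.
  rewrite nth_seq_map, map_map. ring.
Qed.

Lemma SK_diag H : resp H -> forall k, SK Cf H k = Cmul (lam k) (H k).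
Proof.
  intros HH [M0 Ts]. rewrite SK_split. set (g := fun x => CLog (tau Sp (Cf x))).
  match goal with |- Cadd ?X ?Y = _ =>
    assert (E1 : X = Cmul (Csum (map g M0)) (H (M0, Ts)));
    [apply (skm_diag M0 (fun k' => H (fst k', snd k' ++ Ts))); intros x _; rewrite keyof_single; reflexivity|];
    assert (E2 : Y = Cmul (Csum (map g (concat Ts))) (H (M0, Ts)))
  end.
  { unfold Tsum. rewrite (Csum_map_ext _ (fun j => Cmul (H (M0, Ts)) (Csum (map g (nth j Ts []))))).
    - rewrite Csum_map_mul, <- (map_map (fun j => nth j Ts []) (fun M => Csum (map g M))), nth_seq_map, Csum_concat. ring.
    - intros j Hj. apply in_seq in Hj. cbv beta.
      rewrite (@skm_diag (nth j Ts []) (fun k' => H (M0 ++ [], rem j Ts ++ trpart k')) (H (M0, Ts))). unfold g; ring.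
      intros x Hx. rewrite keyof_single. apply HH. apply in_seq in Hx.
      unfold trpart; cbn [fst snd]. destruct (nth j Ts []) as [|a M] eqn:E. simpl in Hx; lia.
      split; cbn [fst snd]. apply app_nil_r.
      eapply perm_trans. apply Permutation_sym, Permutation_cons_append.
      rewrite <- E. apply Permutation_sym, rem_perm. lia. }
  rewrite E1, E2. unfold lam, letters; cbn [fst snd]. rewrite map_app, Csum_app. unfold g; ring.
Qed.
End Diag.

Section Skel.
Variable I : Type.

Lemma skm_in (w : list I) s : In s (skm w) ->
  exists ks, s = (w, ks, keyof w ks) /\ In ks (sublists (seq 0 (length w))) /\ ks <> [].
Proof.
  unfold skm; intro H. apply in_flat_map in H as [ks [Hks H]].
  destruct ks as [|a t]; [destruct H|]. destruct H as [<-|[]]. exists (a :: t); repeat split; auto; discriminate.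
Qed.

Lemma skel_in (k : key I) s : In s (skel k) ->
  (exists s0, In s0 (skm (fst k)) /\ s = (fst s0, (fst (snd s0), snd (snd s0) ++ snd k))) \/
  (exists j s0, j < length (snd k) /\ In s0 (skm (nth j (snd k) [])) /\
      s = (fst s0, (fst k ++ [], rem j (snd k) ++ trpart (snd s0)))).
Proof.
  unfold skel; intro H. apply in_app_or in H as [H|H].
  - left. apply in_map_iff in H as [s0 [<- H]]. eauto.
  - right. apply in_flat_map in H as [j [Hj H]]. apply in_map_iff in H as [s0 [<- H]].
    apply in_seq in Hj. exists j, s0. repeat split; auto; lia.
Qed.

Lemma trpart_letters (k : key I) : concat (trpart k) = letters k.
Proof. unfold trpart, letters. destruct (fst k); reflexivity. Qed.

Lemma rem_len {T} j (l : list T) : j < length l -> length (rem j l) = length l - 1.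
Proof. intro. unfold rem. rewrite length_app, length_firstn, length_skipn. lia. Qed.

Lemma skel_letters (k : key I) s : In s (skel k) -> Permutation (letters (snd s)) (letters k).
Proof.
  intro H. destruct k as [M0 Ts]. apply skel_in in H as [[s0 [H1 ->]]|[j [s0 [Hj [H1 ->]]]]];
    cbn [fst snd] in *; apply skm_in in H1 as [ks [-> [Hks Hne]]]; cbn [fst snd].
  - pose proof (keyof_perm _ Hks Hne) as P. unfold letters in *; cbn [fst snd] in *.
    rewrite concat_app, app_assoc. apply Permutation_app_tail; auto.
  - pose proof (keyof_perm _ Hks Hne) as P. rewrite <- trpart_letters in P.
    unfold letters; cbn [fst snd]. rewrite app_nil_r. apply Permutation_app_head.
    rewrite concat_app. eapply perm_trans. apply Permutation_app_comm.
    eapply perm_trans. apply Permutation_app_tail, P.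
    change (nth j Ts [] ++ concat (rem j Ts)) with (concat (nth j Ts [] :: rem j Ts)).
    apply perm_concat, Permutation_sym, rem_perm; auto.
Qed.

Lemma skel_ks_ne (k : key I) s : In s (skel k) -> snd (fst s) <> [].
Proof.
  intro H. apply skel_in in H as [[s0 [H1 ->]]|[j [s0 [Hj [H1 ->]]]]];
    apply skm_in in H1 as [ks [-> [Hks Hne]]]; auto.
Qed.

Lemma skel_traces (k : key I) s : In s (skel k) -> 2 <= length (snd (fst s)) ->
  S (length (snd k)) <= length (snd (snd s)).
Proof.
  intros H Hl. destruct k as [M0 Ts]. apply skel_in in H as [[s0 [H1 ->]]|[j [s0 [Hj [H1 ->]]]]];
    cbn [fst snd] in *; apply skm_in in H1 as [ks [-> [Hks Hne]]]; cbn [fst snd] in *.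
  - unfold keyof; cbn [snd]. rewrite length_app, chunks_len. lia.
  - rewrite length_app, rem_len by auto. unfold trpart.
    pose proof (keyof_fst_ne _ Hks Hne) as F. destruct (fst (keyof (nth j Ts []) ks)); [congruence|].
    cbn [length]. unfold keyof; cbn [snd]. rewrite chunks_len. lia.
Qed.

Definition kvalid (k : key I) := forall M, In M (snd k) -> M <> [].

Lemma skel_valid (k : key I) s : kvalid k -> In s (skel k) -> kvalid (snd s).
Proof.
  intros V H. destruct k as [M0 Ts]. apply skel_in in H as [[s0 [H1 ->]]|[j [s0 [Hj [H1 ->]]]]];
    cbn [fst snd] in *; apply skm_in in H1 as [ks [-> [Hks Hne]]]; cbn [fst snd] in *;
    intros M HM; cbn [snd] in HM; apply in_app_or in HM as [HM|HM].
  - eapply keyof_valid; eauto.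
  - apply V; auto.
  - apply V. unfold rem in HM. apply in_app_or in HM as [HM|HM]; [rewrite <- (firstn_skipn j Ts)|rewrite <- (firstn_skipn (S j) Ts)]; apply in_or_app; auto.
  - unfold trpart in HM. pose proof (keyof_fst_ne _ Hks Hne) as F. destruct (fst (keyof (nth j Ts []) ks)); [congruence|].
    destruct HM as [<-|HM]. discriminate. eapply keyof_valid; eauto.
Qed.
End Skel.

Section Comm.
Variable Sp : StarProbSpace.
Variable I : Type.

Lemma W_ext (G G' : key I -> CC) u : (forall k, G k = G' k) -> W G u = W G' u.
Proof. intro H; unfold W; apply Csum_map_ext; intros; rewrite H; auto. Qed.
Lemma W_mul c (G : key I -> CC) u : W (fun k => Cmul c (G k)) u = Cmul c (W G u).
Proof. unfold W. rewrite <- Csum_map_mul. apply Csum_map_ext; intros; ring. Qed.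
Lemma W_add (G G' : key I -> CC) u : W (fun k => Cadd (G k) (G' k)) u = Cadd (W G u) (W G' u).
Proof. unfold W. rewrite <- Csum_map_add. apply Csum_map_ext; intros; ring. Qed.

Definition linv (psi : key I -> CC) := forall k1 k2 : key I, Permutation (letters k1) (letters k2) -> psi k1 = psi k2.

Lemma Cmul_comm' a b : Cmul a b = Cmul b a.
Proof. ring. Qed.

Lemma SK_ind_psi (Cf : I -> Sp) psi k key : linv psi ->
  Cmul (SK Cf (ind k) key) (psi k) = Cmul (SK Cf (ind k) key) (psi key).
Proof.
  intro Hp. unfold SK. rewrite !(Cmul_comm' _ (psi _)), <- !Csum_map_mul. apply Csum_map_ext.
  intros s Hs. unfold ind. destruct excluded_middle_informative as [E|E]; [|ring].
  rewrite (Hp k key); auto. eapply perm_trans. apply keq_letters, E. apply skel_letters; auto.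
Qed.
End Comm.

Section Main.
Variable Sp : StarProbSpace.
Variable I : Type.

Lemma lam_linv (Cf : I -> Sp) : linv (lam Sp Cf).
Proof. intros k1 k2 P. unfold lam. apply Csum_perm, Permutation_map; auto. Qed.

Lemma coeff_app (u1 u2 : tpoly I) k : coeff (u1 ++ u2) k = Cadd (coeff u1 k) (coeff u2 k).
Proof. rewrite !coeff_W. apply W_app. Qed.

Variable F : I -> Sp.
Hypothesis hF : forall i, tau Sp (F i) <> C0.

Lemma lam_ind k key : Cmul (lam Sp (tau_fam Sp F) key) (ind k key) = Cmul (lam Sp (tau_fam Sp F) k) (ind k key).
Proof.
  unfold ind. destruct excluded_middle_informative as [E|E]; [|ring].
  rewrite (lam_linv _ k key); auto. apply keq_letters; auto.
Qed.

Lemma coeff_Dt u k : coeff (Dop Sp (tau_fam Sp F) u) k = Cmul (lam Sp (tau_fam Sp F) k) (coeff u k).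
Proof.
  rewrite coeff_Dop, coeff_W.
  rewrite (W_ext _ (fun key => Cmul (lam Sp (tau_fam Sp F) k) (ind k key))).
  apply W_mul. intro key. rewrite (SK_diag Sp _ (gam_tau_long Sp F hF)) by apply ind_resp. apply lam_ind.
Qed.

Lemma comm_t (Cf' : I -> Sp) u k :
  coeff (Dop Sp (tau_fam Sp F) (Dop Sp Cf' u)) k = coeff (Dop Sp Cf' (Dop Sp (tau_fam Sp F) u)) k.
Proof.
  rewrite coeff_Dt, !coeff_Dop, W_Dop.
  rewrite (W_ext (SK _ (SK Cf' (ind k))) (fun key => Cmul (lam Sp (tau_fam Sp F) k) (SK Cf' (ind k) key))).
  rewrite W_mul; auto.
  intro key. rewrite (SK_diag Sp _ (gam_tau_long Sp F hF)) by (apply SK_resp', ind_resp).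
  rewrite Cmul_comm', <- (SK_ind_psi Sp Cf' k key (lam_linv _)). apply Cmul_comm'.
Qed.
End Main.

Lemma split_A (Sp : StarProbSpace) (I : Type) (A : I -> Sp) (hA : forall i, tau Sp (A i) <> C0) u k :
  coeff (Dop Sp A u) k = Cadd (coeff (Dop Sp (tau_fam Sp A) u) k) (coeff (Dop Sp (norm_fam Sp A) u) k).
Proof.
  rewrite !coeff_Dop, <- W_add. apply W_ext. intro key. unfold SK. rewrite <- Csum_map_add.
  apply Csum_map_ext. intros s Hs. unfold gs. rewrite (gam_split Sp A hA) by (eapply skel_ks_ne; eauto). ring.
Qed.

Fixpoint sC (f : nat -> CC) (n : nat) : CC :=
  match n with 0 => C0 | S n => Cadd (sC f n) (f n) end.

Lemma Csum_seq f n : Csum (map f (seq 0 n)) = sC f n.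
Proof. induction n. reflexivity. rewrite seq_S, map_app, Csum_app, IHn. cbn [sC map Csum fold_right]. unfold Csum; simpl. ring. Qed.

Lemma sC_ext f g n : (forall i, i < n -> f i = g i) -> sC f n = sC g n.
Proof. induction n; intro H; simpl; auto. rewrite IHn, H; auto. Qed.

Lemma sC_add f g n : sC (fun i => Cadd (f i) (g i)) n = Cadd (sC f n) (sC g n).
Proof. induction n; simpl. ring. rewrite IHn; ring. Qed.

Lemma sC_mul c f n : sC (fun i => Cmul c (f i)) n = Cmul c (sC f n).
Proof. induction n; simpl. ring. rewrite IHn; ring. Qed.

Lemma sC_shift f n : sC f (S n) = Cadd (f 0) (sC (fun i => f (S i)) n).
Proof. induction n; simpl in *. ring. rewrite IHn; ring. Qed.

Lemma sC_zero f n : (forall i, i < n -> f i = C0) -> sC f n = C0.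
Proof. intro H; rewrite (sC_ext f (fun _ => C0)) by auto. induction n; simpl; auto. rewrite IHn; [ring|]; auto. Qed.

Lemma sC_split f n m : sC f (n + m) = Cadd (sC f n) (sC (fun i => f (n + i)) m).
Proof. induction m; simpl. rewrite Nat.add_0_r; ring. rewrite Nat.add_succ_r. simpl. rewrite IHm; ring. Qed.

Fixpoint Cpow (z : CC) (n : nat) : CC := match n with 0 => C1 | S n => Cmul z (Cpow z n) end.

Lemma Cpow_add z a b : Cpow z (a + b) = Cmul (Cpow z a) (Cpow z b).
Proof. induction a; simpl. ring. rewrite IHa; ring. Qed.

Lemma Un_cv_const (c : R) : Un_cv (fun _ => c) c.
Proof. intros eps He. exists 0%nat. intros. unfold Rdist. rewrite Rminus_diag, Rabs_R0. lra. Qed.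

Lemma Un_cv_ev (u u' : nat -> R) l N0 : (forall N, (N0 <= N)%nat -> u' N = u N) -> Un_cv u l -> Un_cv u' l.
Proof.
  intros H Hu eps He. destruct (Hu eps He) as [N HN]. exists (max N N0). intros n Hn.
  rewrite H by lia. apply HN. lia.
Qed.

Lemma Ccv_ev u u' z N0 : (forall N, (N0 <= N)%nat -> u' N = u N) -> Ccv u z -> Ccv u' z.
Proof. intros H [H1 H2]. split; [apply (@Un_cv_ev (fun N => fst (u N)) _ _ N0)|apply (@Un_cv_ev (fun N => snd (u N)) _ _ N0)]; auto; intros; rewrite H; auto. Qed.

Lemma Ccv_const z : Ccv (fun _ => z) z.
Proof. split; apply Un_cv_const. Qed.

Lemma Ccv_add u v a b : Ccv u a -> Ccv v b -> Ccv (fun N => Cadd (u N) (v N)) (Cadd a b).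
Proof. intros [H1 H2] [H3 H4]. split; simpl; apply CV_plus; auto. Qed.

Lemma Ccv_mulc c u a : Ccv u a -> Ccv (fun N => Cmul c (u N)) (Cmul c a).
Proof.
  intros [H1 H2]. split; simpl.
  - apply CV_minus; apply CV_mult; auto; apply Un_cv_const.
  - apply CV_plus; apply CV_mult; auto; apply Un_cv_const.
Qed.

Lemma Ccv_shift u a i : Ccv u a -> Ccv (fun N => u (N - i)%nat) a.
Proof.
  intros [H1 H2]. split; intros eps He.
  - destruct (H1 eps He) as [N HN]. exists (N + i)%nat. intros n Hn. apply HN. lia.
  - destruct (H2 eps He) as [N HN]. exists (N + i)%nat. intros n Hn. apply HN. lia.
Qed.

Lemma Ccv_sC (F : nat -> nat -> CC) (L : nat -> CC) d :
  (forall i, Ccv (F i) (L i)) -> Ccv (fun N => sC (fun i => F i N) d) (sC L d).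
Proof. intro H. induction d; simpl. apply Ccv_const. apply Ccv_add; auto. Qed.

Definition Q (z : CC) : R := (fst z * fst z + snd z * snd z)%R.
Lemma Q_ge0 z : (0 <= Q z)%R.
Proof. unfold Q; nra. Qed.
Lemma Q_mul a b : Q (Cmul a b) = (Q a * Q b)%R.
Proof. unfold Q, Cmul; simpl; ring. Qed.

Lemma Cmod_mul a b : Cmod (Cmul a b) = (Cmod a * Cmod b)%R.
Proof. unfold Cmod. fold (Q (Cmul a b)). fold (Q a). fold (Q b). rewrite Q_mul. apply sqrt_mult; apply Q_ge0. Qed.

Lemma Cmod_pow z i : Cmod (Cpow z i) = (Cmod z ^ i)%R.
Proof. induction i; simpl. unfold Cmod; simpl. replace (1 * 1 + 0 * 0)%R with 1%R by ring. apply sqrt_1.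
  rewrite Cmod_mul, IHi; auto. Qed.

Lemma Cmod_RtoC a : Cmod (RtoC a) = Rabs a.
Proof. unfold Cmod, RtoC; simpl. replace (a * a + 0 * 0)%R with (Rsqr a) by (unfold Rsqr; ring). apply sqrt_Rsqr_abs. Qed.

Lemma fst_le_Cmod z : (Rabs (fst z) <= Cmod z)%R.
Proof. unfold Cmod. rewrite <- sqrt_Rsqr_abs. apply sqrt_le_1. apply Rle_0_sqr. nra. unfold Rsqr; nra. Qed.
Lemma snd_le_Cmod z : (Rabs (snd z) <= Cmod z)%R.
Proof. unfold Cmod. rewrite <- sqrt_Rsqr_abs. apply sqrt_le_1. apply Rle_0_sqr. nra. unfold Rsqr; nra. Qed.

Definition eterm (z : CC) (i : nat) : CC := Cmul (RtoC (/ INR (fact i))) (Cpow z i).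

Lemma eterm_bound z i : Cmod (eterm z i) = (/ INR (fact i) * Cmod z ^ i)%R.
Proof.
  unfold eterm. rewrite Cmod_mul, Cmod_RtoC, Cmod_pow. f_equal. apply Rabs_right.
  apply Rle_ge, Rlt_le, Rinv_0_lt_compat, lt_0_INR, lt_O_fact.
Qed.

Lemma cauchy_comp (S : nat -> R) (P : nat -> R) :
  (forall m n, (m <= n)%nat -> (Rabs (S n - S m) <= P n - P m)%R) -> Cauchy_crit P -> Cauchy_crit S.
Proof.
  intros H HP eps He. destruct (HP eps He) as [N HN]. exists N. intros n m Hn Hm.
  unfold Rdist in *. destruct (Nat.le_ge_cases m n) as [Hmn|Hmn].
  - specialize (H _ _ Hmn). specialize (HN n m Hn Hm). pose proof (Rle_abs (P n - P m)). lra.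
  - specialize (H _ _ Hmn). specialize (HN m n Hm Hn). rewrite Rabs_minus_sym. pose proof (Rle_abs (P m - P n)). lra.
Qed.

Lemma exp_conv z : exists e, Ccv (fun N => sC (eterm z) (S N)) e.
Proof.
  set (P := fun N => sum_f_R0 (fun i => / INR (fact i) * Cmod z ^ i)%R N).
  assert (HP : Cauchy_crit P).
  { apply CV_Cauchy. exists (exp (Cmod z)). unfold exp. destruct (exist_exp (Cmod z)) as [l Hl]. simpl.
    intros eps He. destruct (Hl eps He) as [N HN]. exists N. intros; apply HN; auto. }
  assert (Hb : forall m n, (m <= n)%nat ->
     (Rabs (fst (sC (eterm z) (S n)) - fst (sC (eterm z) (S m))) <= P n - P m)%R /\
     (Rabs (snd (sC (eterm z) (S n)) - snd (sC (eterm z) (S m))) <= P n - P m)%R).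
  { intros m n Hmn. induction Hmn.
    - rewrite !Rminus_diag, Rabs_R0. lra.
    - destruct IHHmn as [H1 H2]. change (sC (eterm z) (S (S m0))) with (Cadd (sC (eterm z) (S m0)) (eterm z (S m0))).
      replace (P (S m0)) with (P m0 + Cmod (eterm z (S m0)))%R by (rewrite eterm_bound; reflexivity).
      pose proof (fst_le_Cmod (eterm z (S m0))). pose proof (snd_le_Cmod (eterm z (S m0))).
      change (fst (Cadd (sC (eterm z) (S m0)) (eterm z (S m0)))) with (fst (sC (eterm z) (S m0)) + fst (eterm z (S m0)))%R.
      change (snd (Cadd (sC (eterm z) (S m0)) (eterm z (S m0)))) with (snd (sC (eterm z) (S m0)) + snd (eterm z (S m0)))%R.
      split.
      + replace (fst (sC (eterm z) (S m0)) + fst (eterm z (S m0)) - fst (sC (eterm z) (S m)))%R with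
          ((fst (sC (eterm z) (S m0)) - fst (sC (eterm z) (S m))) + fst (eterm z (S m0)))%R by ring.
        eapply Rle_trans. apply Rabs_triang. lra.
      + replace (snd (sC (eterm z) (S m0)) + snd (eterm z (S m0)) - snd (sC (eterm z) (S m)))%R with
          ((snd (sC (eterm z) (S m0)) - snd (sC (eterm z) (S m))) + snd (eterm z (S m0)))%R by ring.
        eapply Rle_trans. apply Rabs_triang. lra. }
  destruct (R_complete (fun N => fst (sC (eterm z) (S N)))) as [l1 H1].
  { apply (@cauchy_comp _ P); auto. intros; apply Hb; auto. }
  destruct (R_complete (fun N => snd (sC (eterm z) (S N)))) as [l2 H2].
  { apply (@cauchy_comp _ P); auto. intros; apply Hb; auto. }
  exists (l1, l2). split; auto.
Qed.

Definition CExp (z : CC) : CC := proj1_sig (constructive_indefinite_description _ (exp_conv z)).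
Lemma CExp_spec z : Ccv (fun N => sC (eterm z) (S N)) (CExp z).
Proof. unfold CExp. destruct constructive_indefinite_description; auto. Qed.

Fixpoint bin (n k : nat) : nat :=
  match n, k with _, 0 => 1 | 0, S _ => 0 | S n', S k' => bin n' k' + bin n' (S k') end.

Lemma bin_gt n k : n < k -> bin n k = 0.
Proof. revert k; induction n; intros [|k] H; simpl; try lia. rewrite !IHn; lia. Qed.

Lemma bin_fact n k : k <= n -> bin n k * fact k * fact (n - k) = fact n.
Proof.
  revert k; induction n; intros [|k] H; simpl; try lia.
  destruct (Nat.eq_dec k n) as [->|Hne].
    + rewrite (bin_gt (n:=n) (k:=S n)) by lia. rewrite Nat.sub_diag. pose proof (IHn n (le_n n)) as E. rewrite Nat.sub_diag in E.
      simpl in *. nia.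
    + pose proof (IHn k ltac:(lia)) as E1. pose proof (IHn (S k) ltac:(lia)) as E2.
      replace (n - k) with (S (n - S k)) in * by lia. simpl in *. nia.
Qed.

Lemma bin_0 n : bin n 0 = 1.
Proof. destruct n; reflexivity. Qed.

Definition Cb (n k : nat) : CC := RtoC (INR (bin n k)).

Lemma RtoC_add a b : RtoC (a + b) = Cadd (RtoC a) (RtoC b).
Proof. unfold RtoC, Cadd; apply Ceq; simpl; ring. Qed.
Lemma RtoC_mul a b : RtoC (a * b) = Cmul (RtoC a) (RtoC b).
Proof. unfold RtoC, Cmul; apply Ceq; simpl; ring. Qed.

Lemma pascal_C (lam : CC) (a : nat -> CC) j :
  sC (fun i => Cmul (Cb j i) (Cmul (Cpow lam (j - i)) (Cadd (Cmul lam (a i)) (a (S i))))) (S j)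
  = sC (fun i => Cmul (Cb (S j) i) (Cmul (Cpow lam (S j - i)) (a i))) (S (S j)).
Proof.
  rewrite (sC_shift (fun i => Cmul (Cb (S j) i) _)). cbn beta.
  rewrite (sC_ext (fun i => Cmul (Cb (S j) (S i)) (Cmul (Cpow lam (S j - S i)) (a (S i))))
    (fun i => Cadd (Cmul (Cb j i) (Cmul (Cpow lam (j - i)) (a (S i)))) (Cmul (Cb j (S i)) (Cmul (Cpow lam (j - i)) (a (S i)))))).
  2:{ intros i _. unfold Cb. cbn [bin]. rewrite plus_INR, RtoC_add. simpl (S j - S i). ring. }
  rewrite sC_add.
  rewrite (sC_ext (fun i => Cmul (Cb j i) (Cmul (Cpow lam (j - i)) (Cadd (Cmul lam (a i)) (a (S i)))))
    (fun i => Cadd (Cmul (Cb j i) (Cmul (Cpow lam (j - i)) (Cmul lam (a i)))) (Cmul (Cb j i) (Cmul (Cpow lam (j - i)) (a (S i)))))).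
  2:{ intros; ring. }
  rewrite sC_add. 
  assert (E : sC (fun i => Cmul (Cb j i) (Cmul (Cpow lam (j - i)) (Cmul lam (a i)))) (S j) =
    Cadd (Cmul (Cb (S j) 0) (Cmul (Cpow lam (S j - 0)) (a 0))) (sC (fun i => Cmul (Cb j (S i)) (Cmul (Cpow lam (j - i)) (a (S i)))) (S j))).
  { rewrite sC_shift. cbn [sC]. replace (Cb j (S j)) with C0 by (unfold Cb; rewrite bin_gt by lia; reflexivity). f_equal.
    - unfold Cb; rewrite !bin_0, Nat.sub_0_r. change (RtoC (INR 1)) with C1. simpl. ring.
    - rewrite sC_ext with (g := fun i => Cmul (Cb j (S i)) (Cmul (Cpow lam (j - i)) (a (S i)))).
      ring. intros i Hi. replace (j - i) with (S (j - S i)) by lia. simpl. ring. }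
  rewrite E. ring.
Qed.

Lemma sum_swap (x : nat -> nat -> CC) N :
  sC (fun j => sC (fun i => x i (j - i)) (S j)) (S N) = sC (fun i => sC (fun m => x i m) (S N - i)) (S N).
Proof.
  induction N.
  - simpl. ring.
  - change (sC (fun j => sC (fun i => x i (j - i)) (S j)) (S (S N))) with
      (Cadd (sC (fun j => sC (fun i => x i (j - i)) (S j)) (S N)) (sC (fun i => x i (S N - i)) (S (S N)))).
    rewrite IHN.
    rewrite (sC_ext (fun i => sC (fun m => x i m) (S (S N) - i))
       (fun i => Cadd (sC (fun m => x i m) (S N - i)) (x i (S N - i)))).
    2:{ intros i Hi. replace (S (S N) - i) with (S (S N - i)) by lia. reflexivity. }
    rewrite sC_add. f_equal.
    change (sC (fun i => sC (fun m => x i m) (S N - i)) (S (S N))) with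
      (Cadd (sC (fun i => sC (fun m => x i m) (S N - i)) (S N)) (sC (fun m => x (S N) m) (S N - S N))).
    rewrite Nat.sub_diag. change (sC (fun m => x (S N) m) 0) with C0. ring.
Qed.

Lemma fact_rel j i : i <= j ->
  Cmul (RtoC (/ INR (fact j))) (Cb j i) = Cmul (RtoC (/ INR (fact i))) (RtoC (/ INR (fact (j - i)))).
Proof.
  intro H. unfold Cb. rewrite <- !RtoC_mul. f_equal.
  pose proof (bin_fact H) as E. apply (f_equal INR) in E. rewrite !mult_INR in E.
  pose proof (INR_fact_neq_0 j). pose proof (INR_fact_neq_0 i). pose proof (INR_fact_neq_0 (j - i)).
  rewrite <- E. field. repeat split; auto. intro Z; rewrite Z in E; apply H0; rewrite <- E; ring.
Qed.

Lemma sC_split_le f n d : d <= n -> sC f n = Cadd (sC f d) (sC (fun i => f (d + i)) (n - d)).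
Proof. intro. replace n with (d + (n - d)) at 1 by lia. apply sC_split. Qed.

Lemma final_cv (lam : CC) (a : nat -> CC) d : (forall i, d <= i -> a i = C0) ->
  Ccv (fun N => sC (fun j => Cmul (RtoC (/ INR (fact j))) (sC (fun i => Cmul (Cb j i) (Cmul (Cpow lam (j - i)) (a i))) (S j))) (S N))
      (sC (fun i => Cmul (RtoC (/ INR (fact i))) (Cmul (a i) (CExp lam))) d).
Proof.
  intro Ha. set (x := fun i m => Cmul (Cmul (RtoC (/ INR (fact i))) (a i)) (eterm lam m)).
  apply (@Ccv_ev (fun N => sC (fun i => Cmul (Cmul (RtoC (/ INR (fact i))) (a i)) (sC (eterm lam) (S (N - i)))) d) _ _ d).
  - intros N HN.
    rewrite (sC_ext _ (fun j => sC (fun i => x i (j - i)) (S j))).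
    2:{ intros j _. rewrite <- sC_mul. apply sC_ext. intros i Hi. unfold x, eterm.
        replace (Cmul (RtoC (/ INR (fact j))) (Cmul (Cb j i) (Cmul (Cpow lam (j - i)) (a i)))) with
          (Cmul (Cmul (RtoC (/ INR (fact j))) (Cb j i)) (Cmul (Cpow lam (j - i)) (a i))) by ring.
        rewrite fact_rel by lia. ring. }
    rewrite sum_swap. unfold x. rewrite (sC_ext _ (fun i => Cmul (Cmul (RtoC (/ INR (fact i))) (a i)) (sC (eterm lam) (S N - i)))).
    2:{ intros; apply sC_mul. }
    rewrite (@sC_split_le _ (S N) d) by lia.
    rewrite (@sC_zero (fun i => Cmul (Cmul (RtoC (/ INR (fact (d + i)))) (a (d + i))) (sC (eterm lam) (S N - (d + i)))) (S N - d)). 2:{ intros i _. rewrite Ha by lia. ring. }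
    rewrite (sC_ext (fun i => Cmul (Cmul (RtoC (/ INR (fact i))) (a i)) (sC (eterm lam) (S N - i)))
      (fun i => Cmul (Cmul (RtoC (/ INR (fact i))) (a i)) (sC (eterm lam) (S (N - i))))).
    ring. intros i Hi. replace (S N - i) with (S (N - i)) by lia. reflexivity.
  - rewrite (sC_ext (fun i => Cmul (RtoC (/ INR (fact i))) (Cmul (a i) (CExp lam)))
      (fun i => Cmul (Cmul (RtoC (/ INR (fact i))) (a i)) (CExp lam))) by (intros; ring).
    apply Ccv_sC with (F := fun i N => Cmul (Cmul (RtoC (/ INR (fact i))) (a i)) (sC (eterm lam) (S (N - i)))).
    intro i. apply Ccv_mulc. apply (@Ccv_shift (fun N => sC (eterm lam) (S N)) _ i). apply CExp_spec.
Qed.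

Lemma lt_contra a b c : a < b -> b <= c -> a = c -> False.
Proof. lia. Qed.
Lemma lt_contra3 x y i : y < i -> i <= x -> x = y -> False.
Proof. lia. Qed.

Lemma contra4 a b c d : a < S b -> b <= c -> S c <= d -> a = d -> False.
Proof. lia. Qed.

Lemma contra5 D i a b c e : D < i -> i <= a -> a = b -> b <= c -> e + c <= D -> False.
Proof. lia. Qed.

Section Iter.
Variable Sp : StarProbSpace.
Variable I : Type.

Lemma iter_resp (Cf : I -> Sp) j u u' : tp_eq u u' -> tp_eq (Nat.iter j (Dop Sp Cf) u) (Nat.iter j (Dop Sp Cf) u').
Proof. intro E. induction j; simpl; auto. apply Dop_resp; auto. Qed.

Lemma Dop_app (Cf : I -> Sp) u1 u2 : Dop Sp Cf (u1 ++ u2) = Dop Sp Cf u1 ++ Dop Sp Cf u2.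
Proof. unfold Dop. apply flat_map_app. Qed.

Lemma iter_app (Cf : I -> Sp) j u1 u2 : Nat.iter j (Dop Sp Cf) (u1 ++ u2) = Nat.iter j (Dop Sp Cf) u1 ++ Nat.iter j (Dop Sp Cf) u2.
Proof. induction j; simpl; auto. rewrite IHj. apply Dop_app. Qed.

Lemma Dop_in (Cf : I -> Sp) u ck : In ck (Dop Sp Cf u) ->
  exists ck0 s, In ck0 u /\ In s (skel (snd ck0)) /\ snd ck = snd s.
Proof.
  unfold Dop; intro H. apply in_flat_map in H as [ck0 [H0 H]]. apply in_map_iff in H as [dk [<- H]].
  rewrite D_key_skel in H. apply in_map_iff in H as [s [<- Hs]]. exists ck0, s; auto.
Qed.

Definition scl (psi : key I -> CC) (u : tpoly I) : tpoly I :=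
  map (fun ck => (Cmul (fst ck) (psi (snd ck)), snd ck)) u.

Lemma W_scl (psi : key I -> CC) (G : key I -> CC) u :
  W G (scl psi u) = W (fun key => Cmul (psi key) (G key)) u.
Proof. unfold W, scl. rewrite map_map. apply Csum_map_ext. intros; simpl; ring. Qed.

Lemma coeff_scl psi u k : linv psi -> coeff (scl psi u) k = Cmul (psi k) (coeff u k).
Proof.
  intro Hp. rewrite !coeff_W, W_scl, <- W_mul. apply W_ext. intro key. unfold ind.
  destruct excluded_middle_informative as [E|E]; [|ring]. rewrite (Hp key k); [ring|].
  apply Permutation_sym, keq_letters; auto.
Qed.

Lemma coeff_Dop_scl (Cf : I -> Sp) psi u k : linv psi ->
  coeff (Dop Sp Cf (scl psi u)) k = Cmul (psi k) (coeff (Dop Sp Cf u) k).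
Proof.
  intro Hp. rewrite !coeff_Dop, W_scl, <- W_mul. apply W_ext. intro key.
  rewrite Cmul_comm', <- (SK_ind_psi Sp Cf k key Hp). ring.
Qed.

Lemma iter_scl (Cf : I -> Sp) psi u i : linv psi ->
  tp_eq (Nat.iter i (Dop Sp Cf) (scl psi u)) (scl psi (Nat.iter i (Dop Sp Cf) u)).
Proof.
  intros Hp. induction i; simpl. intro; reflexivity.
  intro k. rewrite (Dop_resp Sp Cf IHi k), coeff_Dop_scl, coeff_scl; auto.
Qed.

Lemma coeff_concat (L : list (tpoly I)) k : coeff (concat L) k = Csum (map (fun u => coeff u k) L).
Proof. induction L; simpl. reflexivity. rewrite coeff_app, IHL. reflexivity. Qed.

Lemma coeff_cscale c (u : tpoly I) k : coeff (map (fun ck => (Cmul c (fst ck), snd ck)) u) k = Cmul c (coeff u k).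
Proof. rewrite !coeff_W. unfold W. rewrite map_map, <- Csum_map_mul. apply Csum_map_ext. intros; simpl; ring. Qed.

Lemma coeff_nokey (u : tpoly I) k : (forall ck, In ck u -> ~ key_equiv k (snd ck)) -> coeff u k = C0.
Proof.
  intro H. rewrite coeff_eq. apply Csum_map_zero. intros ck Hck. unfold ind.
  destruct excluded_middle_informative as [E|E]; [elim (H ck Hck E)|ring].
Qed.

Lemma Csum_filter {T} (f : T -> CC) p l : (forall x, In x l -> p x = false -> f x = C0) ->
  Csum (map f (filter p l)) = Csum (map f l).
Proof.
  intro H. induction l as [|x l IH]; [reflexivity|]. cbn [filter]. destruct (p x) eqn:E; cbn [map].
  - unfold Csum in *; cbn [fold_right]. rewrite IH; auto. intros; apply H; simpl; auto.
  - unfold Csum in *; cbn [fold_right]. rewrite (H x), IH; simpl; auto. ring. intros; apply H; simpl; auto.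
Qed.

Lemma concat_len (Ts : list (list I)) : (forall M, In M Ts -> M <> []) -> length Ts <= length (concat Ts).
Proof.
  intro H. induction Ts as [|M Ts IH]; simpl; auto. rewrite length_app.
  destruct M. elim (H [] (or_introl eq_refl)); auto. simpl. specialize (IH ltac:(intros; apply H; right; auto)). lia.
Qed.

Variable A : I -> Sp.
Hypothesis hA : forall i, tau Sp (A i) <> C0.
Let lm := lam Sp (tau_fam Sp A).

Lemma iter_Dt j u k : coeff (Nat.iter j (Dop Sp (tau_fam Sp A)) u) k = Cmul (Cpow (lm k) j) (coeff u k).
Proof. induction j; simpl. ring. rewrite (coeff_Dt Sp A hA), IHj. unfold lm; ring. Qed.

Lemma iter_n_t i u k : coeff (Nat.iter i (Dop Sp (norm_fam Sp A)) (Dop Sp (tau_fam Sp A) u)) k =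
  Cmul (lm k) (coeff (Nat.iter i (Dop Sp (norm_fam Sp A)) u) k).
Proof.
  revert k. induction i; intro k; simpl. apply (coeff_Dt Sp A hA).
  assert (E : tp_eq (Nat.iter i (Dop Sp (norm_fam Sp A)) (Dop Sp (tau_fam Sp A) u))
                    (Dop Sp (tau_fam Sp A) (Nat.iter i (Dop Sp (norm_fam Sp A)) u))).
  { intro k'. rewrite IHi, (coeff_Dt Sp A hA). reflexivity. }
  rewrite (Dop_resp Sp _ E k), <- (comm_t Sp A hA), (coeff_Dt Sp A hA). reflexivity.
Qed.

Lemma iter_n_A i u k : coeff (Nat.iter i (Dop Sp (norm_fam Sp A)) (Dop Sp A u)) k =
  Cadd (Cmul (lm k) (coeff (Nat.iter i (Dop Sp (norm_fam Sp A)) u) k))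
       (coeff (Nat.iter (S i) (Dop Sp (norm_fam Sp A)) u) k).
Proof.
  assert (E : tp_eq (Dop Sp A u) (Dop Sp (tau_fam Sp A) u ++ Dop Sp (norm_fam Sp A) u)).
  { intro k'. rewrite coeff_app. apply split_A; auto. }
  rewrite (iter_resp _ i E k), iter_app, coeff_app, iter_n_t, Nat.iter_succ_r. reflexivity.
Qed.

Lemma iter_A j u k : coeff (Nat.iter j (Dop Sp A) u) k =
  sC (fun i => Cmul (Cb j i) (Cmul (Cpow (lm k) (j - i)) (coeff (Nat.iter i (Dop Sp (norm_fam Sp A)) u) k))) (S j).
Proof.
  revert u. induction j; intro u.
  - simpl. unfold Cb; simpl. change (RtoC 1) with C1. ring.
  - rewrite Nat.iter_succ_r, IHj.
    rewrite (sC_ext _ (fun i => Cmul (Cb j i) (Cmul (Cpow (lm k) (j - i))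
        (Cadd (Cmul (lm k) ((fun i => coeff (Nat.iter i (Dop Sp (norm_fam Sp A)) u) k) i))
              ((fun i => coeff (Nat.iter i (Dop Sp (norm_fam Sp A)) u) k) (S i)))))).
    apply pascal_C. intros i _. rewrite iter_n_A. reflexivity.
Qed.

Lemma lower_bound u : forall i k, length (snd k) < i -> coeff (Nat.iter i (Dop Sp (norm_fam Sp A)) u) k = C0.
Proof.
  induction i as [|i IH]; intros k Hk. lia.
  simpl. set (X := Nat.iter i (Dop Sp (norm_fam Sp A)) u).
  set (X' := filter (fun ck => Nat.leb i (length (snd (snd ck)))) X).
  assert (E : tp_eq X X').
  { intro k0. unfold X'. rewrite !coeff_eq. destruct (Nat.lt_ge_cases (length (snd k0)) i) as [H|H].
    - rewrite <- coeff_eq. unfold X. rewrite IH by auto. symmetry. apply Csum_map_zero.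
      intros ck Hck. apply filter_In in Hck as [_ Hck]. apply Nat.leb_le in Hck. unfold ind.
      destruct excluded_middle_informative as [E|E]; [|ring]. apply keq_len in E. exfalso. exact (lt_contra H Hck E).
    - symmetry. apply Csum_filter. intros ck _ Hp. apply Nat.leb_gt in Hp. unfold ind.
      destruct excluded_middle_informative as [E|E]; [|ring]. apply keq_len in E. exfalso. exact (lt_contra3 Hp H E). }
  rewrite (Dop_resp Sp _ E k), coeff_Dop. unfold W. apply Csum_map_zero. intros ck Hck.
  unfold X' in Hck. apply filter_In in Hck as [_ Hck]. apply Nat.leb_le in Hck.
  unfold SK. rewrite Csum_map_zero. ring. intros s Hs.
  pose proof (skel_ks_ne _ _ Hs) as Hne. destruct (snd (fst s)) as [|x [|y t]] eqn:Eks; [congruence| |].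
  - unfold gs. rewrite Eks, (gam_n_single Sp A hA). ring.
  - pose proof (skel_traces _ _ Hs ltac:(rewrite Eks; simpl; lia)). unfold ind.
    destruct excluded_middle_informative as [E2|E2]; [|ring]. apply keq_len in E2. exfalso. exact (contra4 Hk Hck H E2).
Qed.

Definition inv_bound (D : nat) (u : tpoly I) :=
  forall ck, In ck u -> kvalid (snd ck) /\ length (letters (snd ck)) <= D.

Lemma inv_iter (Cf : I -> Sp) D u i : inv_bound D u -> inv_bound D (Nat.iter i (Dop Sp Cf) u).
Proof.
  intro H. induction i; simpl; auto. intros ck Hck. apply Dop_in in Hck as [ck0 [s [H0 [Hs E]]]].
  destruct (IHi _ H0) as [V L]. rewrite E. split. eapply skel_valid; eauto.
  rewrite (Permutation_length (skel_letters _ _ Hs)). auto.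
Qed.

Lemma nilpotent D u : inv_bound D u -> forall i k, D < i -> coeff (Nat.iter i (Dop Sp (norm_fam Sp A)) u) k = C0.
Proof.
  intros H i k Hi. destruct (Nat.lt_ge_cases (length (snd k)) i) as [Hk|Hk].
  apply lower_bound; auto.
  apply coeff_nokey. intros ck Hck E. destruct (inv_iter (norm_fam Sp A) i H _ Hck) as [V L].
  pose proof (concat_len _ V). apply keq_len in E. unfold letters in L. rewrite length_app in L.
  exfalso. exact (@contra5 _ _ _ _ _ _ Hi Hk E H0 L).
Qed.
End Iter.

Unset Implicit Arguments.
Theorem proposition2p14 (Sp : StarProbSpace) (I : Type) (A B : I -> Sp)
  (hA : forall i, @tau Sp (A i) <> C0) (hB : forall i, @tau Sp (B i) <> C0) :
  let DA := @Dop Sp I A in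
  let DtA := @Dop Sp I (@tau_fam Sp I A) in
  let DtB := @Dop Sp I (@tau_fam Sp I B) in
  let DnA := @Dop Sp I (@norm_fam Sp I A) in
  commutes DtA DtB /\ commutes DtA DnA /\ commutes DtB DnA /\
  (forall v, tp_valid v -> tp_eq (DA v) (DtA v ++ DnA v)) /\
  (forall v, tp_valid v -> exists w1 w2,
      tp_valid w1 /\ exp_series DtA v w1 /\ exp_series DnA w1 w2 /\
      exp_series DA v w2).
Proof.
  cbv zeta. split; [|split; [|split; [|split]]].
  - intros v _ k. apply (comm_t Sp A hA (tau_fam Sp B)).
  - intros v _ k. apply (comm_t Sp A hA (norm_fam Sp A)).
  - intros v _ k. apply (comm_t Sp B hB (norm_fam Sp A)).
  - intros v _ k. rewrite coeff_app. apply split_A; auto.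
  - intros v Hv.
    set (lm := lam Sp (tau_fam Sp A)).
    set (psi := fun key => CExp (lm key)).
    assert (Hpsi : linv psi) by (intros k1 k2 P; unfold psi, lm; rewrite (lam_linv Sp _ k1 k2 P); auto).
    set (D := list_max (map (fun ck => length (letters (snd ck))) v)).
    assert (Hinv : inv_bound D v).
    { intros ck Hck. split. intros M HM. apply (Hv ck Hck M HM).
      assert (Hf := proj1 (list_max_le (map (fun ck => length (letters (snd ck))) v) D) (le_n _)).
      rewrite Forall_forall in Hf. apply Hf, in_map_iff. exists ck; auto. }
    set (w1 := scl psi v).
    assert (Hinv1 : inv_bound D w1).
    { intros ck Hck. unfold w1, scl in Hck. apply in_map_iff in Hck as [ck0 [<- H0]]. exact (Hinv ck0 H0). }
    set (a := fun k i => coeff (Nat.iter i (Dop Sp (norm_fam Sp A)) v) k).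
    set (w2 := concat (map (fun i => map (fun ck => (Cmul (RtoC (/ INR (fact i))) (fst ck), snd ck))
                  (Nat.iter i (Dop Sp (norm_fam Sp A)) w1)) (seq 0 (S D)))).
    assert (Hw2' : forall k, coeff w2 k = sC (fun i => Cmul (RtoC (/ INR (fact i))) (coeff (Nat.iter i (Dop Sp (norm_fam Sp A)) w1) k)) (S D)).
    { intro k. unfold w2. rewrite coeff_concat, map_map, Csum_seq. apply sC_ext. intros i _.
      apply coeff_cscale. }
    assert (Hw2 : forall k, coeff w2 k = sC (fun i => Cmul (RtoC (/ INR (fact i))) (Cmul (a k i) (CExp (lm k)))) (S D)).
    { intro k. rewrite Hw2'. apply sC_ext. intros i _.
      f_equal. unfold w1. rewrite (iter_scl Sp _ v i Hpsi k), coeff_scl by auto.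
      unfold psi, a. ring. }
    exists w1, w2. split; [|split; [|split]].
    + intros ck Hck M HM. apply (proj1 (Hinv1 ck Hck) M HM).
    + intro k. unfold exp_partial. unfold w1. rewrite coeff_scl by auto.
      apply (@Ccv_ev (fun N => Cmul (coeff v k) (sC (eterm (lm k)) (S N))) _ _ 0).
      { intros N _. rewrite Csum_seq, <- sC_mul. apply sC_ext. intros j _.
        rewrite (iter_Dt Sp A hA). unfold eterm, lm. ring. }
      replace (Cmul (psi k) (coeff v k)) with (Cmul (coeff v k) (CExp (lm k))) by (unfold psi; ring).
      apply Ccv_mulc, CExp_spec.
    + intro k. unfold exp_partial.
      apply (@Ccv_ev (fun _ => coeff w2 k) _ _ D); [|apply Ccv_const].
      intros N HN. rewrite Csum_seq, Hw2'.
      rewrite (@sC_split_le (fun j => Cmul (RtoC (/ INR (fact j))) (coeff (Nat.iter j (Dop Sp (norm_fam Sp A)) w1) k)) (S N) (S D)) by lia.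
      rewrite (@sC_zero (fun i => Cmul (RtoC (/ INR (fact (S D + i)))) (coeff (Nat.iter (S D + i) (Dop Sp (norm_fam Sp A)) w1) k)) (S N - S D)).
      ring. intros i _. rewrite (nilpotent Sp A hA Hinv1) by lia. ring.
    + intro k. unfold exp_partial.
      apply (@Ccv_ev (fun N => sC (fun j => Cmul (RtoC (/ INR (fact j)))
          (sC (fun i => Cmul (Cb j i) (Cmul (Cpow (lm k) (j - i)) (a k i))) (S j))) (S N)) _ _ 0).
      { intros N _. rewrite Csum_seq. apply sC_ext. intros j _. rewrite (iter_A Sp A hA). reflexivity. }
      rewrite Hw2. apply final_cv. intros i Hi. apply (nilpotent Sp A hA Hinv). lia.
Qed.
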